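(* Let $\Xi=(\xi_1,\dots,\xi_n)$ be a spanning family of vectors in $\mathbb R^k$. The infimum of $SH_\Xi(p)$ over all norms $p$ on $\mathbb R^k$ is positive and is attained at a norm of the form $q(x)=\max_i c_i|\xi_i\cdot x|$ for some $c_1,\dots,c_n\ge0$.
   Context: For a norm $p$ on $\mathbb R^k$, $p^*(v)=\max_{p(x)\le1}|x\cdot v|$ is its dual norm and $\mathrm{vol}(p)$ is the Lebesgue volume of its unit ball. Define $SH_\Xi(p)=\dfrac{\sum_{i=1}^n p^*(\xi_i)}{\mathrm{vol}(p)^{1/k}}$. *)

(* Defs.v *)
From Stdlib Require Import Reals Lra.
Open Scope R_scope.

(* Vectors of R^k are represented as functions nat -> R vanishing at
   indices >= k. *)
Definition inVk (k : nat) (x : nat -> R) : Prop :=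
  forall i, (k <= i)%nat -> x i = 0.

Fixpoint rsum (n : nat) (f : nat -> R) : R :=
  match n with O => 0 | S m => rsum m f + f m end.

Fixpoint rprod (n : nat) (f : nat -> R) : R :=
  match n with O => 1 | S m => rprod m f * f m end.

(* max_{i<n} f i (with value 0 for n = 0; only used for nonnegative f) *)
Fixpoint rmaxn (n : nat) (f : nat -> R) : R :=
  match n with O => 0 | S m => Rmax (rmaxn m f) (f m) end.

Definition dot (k : nat) (x y : nat -> R) : R := rsum k (fun i => x i * y i).

Definition is_norm (k : nat) (p : (nat -> R) -> R) : Prop :=
  (forall x, inVk k x -> p x = 0 -> forall i, x i = 0) /\
  (forall a x, inVk k x -> p (fun i => a * x i) = Rabs a * p x) /\
  (forall x y, inVk k x -> inVk k y -> p (fun i => x i + y i) <= p x + p y).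

Definition is_glb (E : R -> Prop) (m : R) : Prop :=
  (forall x, E x -> m <= x) /\ (forall b, (forall x, E x -> b <= x) -> b <= m).

Definition dual_norm (k : nat) (p : (nat -> R) -> R) (v : nat -> R) (d : R) : Prop :=
  is_lub (fun t => exists x, inVk k x /\ p x <= 1 /\ t = Rabs (dot k x v)) d.

Definition box_vol (k : nat) (a b : nat -> R) : R := rprod k (fun i => b i - a i).

Definition lebesgue_measure (k : nat) (K : (nat -> R) -> Prop) (v : R) : Prop :=
  is_glb (fun l => exists a b : nat -> nat -> R,
             (forall j i, a j i <= b j i) /\
             (forall x, inVk k x -> K x ->
                exists j, forall i, (i < k)%nat -> a j i <= x i <= b j i) /\
             infinite_sum (fun j => box_vol k (a j) (b j)) l) v.

Definition vol (k : nat) (p : (nat -> R) -> R) (v : R) : Prop :=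
  lebesgue_measure k (fun x => p x <= 1) v.

Definition SH (k n : nat) (xi : nat -> nat -> R) (p : (nat -> R) -> R) (s : R) : Prop :=
  exists (d : nat -> R) (v : R),
    (forall i, (i < n)%nat -> dual_norm k p (xi i) (d i)) /\
    vol k p v /\
    s = rsum n d / Rpower v (/ INR k).

Definition spans (k n : nat) (xi : nat -> nat -> R) : Prop :=
  (forall i, (i < n)%nat -> inVk k (xi i)) /\
  (forall v, inVk k v -> exists c : nat -> R,
     forall j, (j < k)%nat -> v j = rsum n (fun i => c i * xi i j)).

(* Main.v *)
Require Import Defs.
From Stdlib Require Import Reals Lra Lia Arith ClassicalEpsilon FunctionalExtensionality Classical.
Section EncS.
Local Open Scope nat_scope.

Fixpoint enc (M : nat -> nat) (N k : nat) : nat :=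
  match k with O => O | S k => enc M N k + M k * N ^ k end.

Lemma enc_spec M N k : (0 < N) -> (forall l, l < k -> M l < N) ->
  enc M N k < N ^ k /\ forall l, l < k -> (enc M N k / N ^ l) mod N = M l.
Proof. intros HN. induction k; intros HM. simpl; split; [lia| intros; lia].
 destruct IHk as [H1 H2]. intros; apply HM; lia. simpl. set (E := enc M N k) in *.
 assert (HP : 0 < N ^ k) by (apply Nat.neq_0_lt_0, Nat.pow_nonzero; lia).
 split. assert (M k <= N - 1) by (specialize (HM k); lia). nia.
 intros l Hl. destruct (Nat.eq_dec l k).
 - subst. rewrite Nat.div_add by lia. rewrite Nat.div_small by lia. simpl. apply Nat.mod_small; apply HM; lia.
 - assert (l < k) by lia. replace (N ^ k) with (N ^ (k - l - 1) * N * N ^ l).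
   rewrite Nat.mul_assoc, Nat.div_add. rewrite Nat.mul_assoc, Nat.Div0.mod_add. apply H2; auto.
   apply Nat.pow_nonzero; lia.
   symmetry. replace k with ((k-l-1)+1+l) at 1 by lia. rewrite !Nat.pow_add_r, Nat.pow_1_r. reflexivity. Qed.

End EncS.
Open Scope R_scope.

Lemma rsum_ext n f g : (forall i, (i < n)%nat -> f i = g i) -> rsum n f = rsum n g.
Proof. induction n; simpl; intros H; auto. rewrite IHn, H; auto. Qed.

Lemma rsum_plus n f g : rsum n (fun i => f i + g i) = rsum n f + rsum n g.
Proof. induction n; simpl; [lra|]. rewrite IHn; lra. Qed.

Lemma rsum_scal n c f : rsum n (fun i => c * f i) = c * rsum n f.
Proof. induction n; simpl; [lra|]. rewrite IHn; lra. Qed.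

Lemma rsum_opp n f : rsum n (fun i => - f i) = - rsum n f.
Proof. induction n; simpl; [lra|]. rewrite IHn; lra. Qed.

Lemma rsum_minus n f g : rsum n (fun i => f i - g i) = rsum n f - rsum n g.
Proof. induction n; simpl; [lra|]. rewrite IHn; lra. Qed.

Lemma rsum_le n f g : (forall i, (i < n)%nat -> f i <= g i) -> rsum n f <= rsum n g.
Proof. induction n; simpl; intros H; [lra|]. pose proof (H n ltac:(lia)). pose proof (IHn ltac:(intros; apply H; lia)). lra. Qed.

Lemma rsum_nonneg n f : (forall i, (i < n)%nat -> 0 <= f i) -> 0 <= rsum n f.
Proof. intros H. replace 0 with (rsum n (fun _ => 0)). apply rsum_le; auto.
 induction n; simpl; auto. rewrite IHn; [lra|]. intros; apply H; lia. Qed.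

Lemma rsum_zero n f : (forall i, (i < n)%nat -> f i = 0) -> rsum n f = 0.
Proof. induction n; simpl; intros H; auto. rewrite IHn, H; try lra; try lia. intros; apply H; lia. Qed.

Lemma rsum_abs n f : Rabs (rsum n f) <= rsum n (fun i => Rabs (f i)).
Proof. induction n; simpl. rewrite Rabs_R0; lra.
 eapply Rle_trans. apply Rabs_triang. lra. Qed.

Lemma rsum_ge_term n f j : (forall i, (i < n)%nat -> 0 <= f i) -> (j < n)%nat -> f j <= rsum n f.
Proof. induction n; simpl; intros H Hj; [lia|].
 destruct (Nat.eq_dec j n). subst. pose proof (rsum_nonneg n f ltac:(intros; apply H; lia)). lra.
 pose proof (IHn ltac:(intros; apply H; lia) ltac:(lia)). pose proof (H n ltac:(lia)). lra. Qed.

Lemma rsum_swap n m (f : nat -> nat -> R) :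
  rsum n (fun i => rsum m (fun j => f i j)) = rsum m (fun j => rsum n (fun i => f i j)).
Proof. induction n; simpl. symmetry; apply rsum_zero; auto.
 rewrite IHn. rewrite <- rsum_plus. reflexivity. Qed.

Lemma rsum_const n c : rsum n (fun _ => c) = INR n * c.
Proof. induction n. simpl; lra. rewrite S_INR. simpl. rewrite IHn. lra. Qed.

Lemma rsum_le_const n f c : (forall i, (i < n)%nat -> f i <= c) -> rsum n f <= INR n * c.
Proof. intros; rewrite <- rsum_const; apply rsum_le; auto. Qed.

Lemma rmaxn_nonneg n f : 0 <= rmaxn n f.
Proof. induction n; simpl. lra. eapply Rle_trans; [apply IHn| apply Rmax_l]. Qed.

Lemma rmaxn_ge n f i : (i < n)%nat -> f i <= rmaxn n f.
Proof. induction n; simpl; intros; [lia|]. destruct (Nat.eq_dec i n). subst; apply Rmax_r.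
 eapply Rle_trans; [apply IHn; lia| apply Rmax_l]. Qed.

Lemma rmaxn_le n f b : 0 <= b -> (forall i, (i < n)%nat -> f i <= b) -> rmaxn n f <= b.
Proof. induction n; simpl; intros; auto. apply Rmax_lub; auto. Qed.

Lemma rmaxn_ext n f g : (forall i, (i < n)%nat -> f i = g i) -> rmaxn n f = rmaxn n g.
Proof. induction n; simpl; intros H; auto. rewrite IHn, H; auto. Qed.

Lemma rmaxn_attained n f : (0 < n)%nat -> (forall i, (i<n)%nat -> 0 <= f i) ->
  exists i, (i < n)%nat /\ rmaxn n f = f i.
Proof. induction n; intros Hn Hf; [lia|]. simpl. destruct n.
 exists 0%nat; split; [lia|]. simpl. rewrite Rmax_right; [reflexivity|]. apply Hf; lia.
 destruct IHn as [i [Hi E]]; try lia. intros; apply Hf; lia.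
 unfold Rmax. destruct (Rle_dec (rmaxn (S n) f) (f (S n))).
 exists (S n); auto. exists i; split; auto; lia. Qed.

Lemma rprod_ext n f g : (forall i, (i < n)%nat -> f i = g i) -> rprod n f = rprod n g.
Proof. induction n; simpl; intros H; auto. rewrite IHn, H; auto. Qed.

Lemma rprod_nonneg n f : (forall i, (i < n)%nat -> 0 <= f i) -> 0 <= rprod n f.
Proof. induction n; simpl; intros H. lra. apply Rmult_le_pos; auto. Qed.

Lemma rprod_pos n f : (forall i, (i < n)%nat -> 0 < f i) -> 0 < rprod n f.
Proof. induction n; simpl; intros H. lra. apply Rmult_lt_0_compat; auto. Qed.

Lemma rprod_le n f g : (forall i, (i < n)%nat -> 0 <= f i <= g i) -> rprod n f <= rprod n g.
Proof. induction n; simpl; intros H. lra.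
 apply Rmult_le_compat; try apply rprod_nonneg; try intros; try apply H; try lia.
 apply IHn; intros; apply H; lia. Qed.

Lemma rprod_const n c : rprod n (fun _ => c) = c ^ n.
Proof. induction n; simpl; auto. rewrite IHn; ring. Qed.

Lemma rprod_scal n c f : rprod n (fun i => c * f i) = c ^ n * rprod n f.
Proof. induction n; simpl. ring. rewrite IHn; ring. Qed.

Lemma rprod_split n j f g h : (j < n)%nat -> f j = g j + h j ->
  (forall i, (i < n)%nat -> i <> j -> f i = g i /\ f i = h i) ->
  rprod n f = rprod n g + rprod n h.
Proof. induction n; simpl; intros Hj E H; [lia|].
 destruct (Nat.eq_dec j n).
 - subst. rewrite (rprod_ext n g f), (rprod_ext n h f). rewrite E; ring.
   all: intros i Hi; destruct (H i); try lia; auto.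
 - rewrite IHn; auto; try lia. destruct (H n); try lia. rewrite <- H0, <- H1; ring.
   Qed.

Lemma rprod_one_diff n j f c : (j < n)%nat -> (forall i, (i < n)%nat -> i <> j -> f i = c) ->
  rprod n f = c ^ (n - 1) * f j.
Proof. induction n; simpl; intros Hj H; [lia|].
 destruct (Nat.eq_dec j n).
 - subst. rewrite (rprod_ext n f (fun _ => c)), rprod_const.
   replace (n - 0)%nat with n by lia. ring. intros; apply H; lia.
 - rewrite IHn; try lia. rewrite (H n); try lia. replace (n - 0)%nat with n by lia.
   replace (pow c n) with (c ^ (n-1) * c). ring. destruct n; [lia|]. simpl. rewrite Nat.sub_0_r. ring.
   intros; apply H; lia. Qed.

Lemma dot_comm k x y : dot k x y = dot k y x.
Proof. unfold dot; apply rsum_ext; intros; ring. Qed.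

Lemma dot_lin_r k x a y b z : dot k x (fun i => a * y i + b * z i) = a * dot k x y + b * dot k x z.
Proof. unfold dot. rewrite <- !rsum_scal, <- rsum_plus. apply rsum_ext; intros; ring. Qed.

Lemma dot_scal_r k x a y : dot k x (fun i => a * y i) = a * dot k x y.
Proof. unfold dot. rewrite <- !rsum_scal. apply rsum_ext; intros; ring. Qed.

Lemma dot_abs_le k x y : Rabs (dot k x y) <= rsum k (fun i => Rabs (x i) * Rabs (y i)).
Proof. unfold dot. eapply Rle_trans. apply rsum_abs. apply rsum_le; intros. rewrite Rabs_mult; lra. Qed.

Lemma pow_le_compat x y m : 0 <= x <= y -> x ^ m <= y ^ m.
Proof. intros; apply pow_incr; auto. Qed.

Lemma Rdiv_nonneg a b : 0 <= a -> 0 < b -> 0 <= a / b.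
Proof. intros; unfold Rdiv; apply Rmult_le_pos; auto. left; apply Rinv_0_lt_compat; auto. Qed.
Lemma Rdiv_pos a b : 0 < a -> 0 < b -> 0 < a / b.
Proof. intros; unfold Rdiv; apply Rmult_lt_0_compat; auto. apply Rinv_0_lt_compat; auto. Qed.
Lemma Rabs_le_inv a b : Rabs a <= b -> - b <= a <= b.
Proof. unfold Rabs; destruct Rcase_abs; lra. Qed.

Lemma rsum_single k j c : (j < k)%nat -> rsum k (fun l => if Nat.eq_dec l j then c else 0) = c.
Proof. induction k; intros Hj; [lia|]. simpl. destruct (Nat.eq_dec k j).
 subst. rewrite rsum_zero. lra. intros; destruct Nat.eq_dec; lia || auto.
 rewrite IHk; lia || lra. Qed.


Definition upd (f : nat -> R) (i : nat) (v : R) : nat -> R :=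
  fun l => if Nat.eq_dec l i then v else f l.

Section Bis.
Variable d : nat.
Hypothesis Hd : (0 < d)%nat.
Variable P : (nat -> R) -> (nat -> R) -> Prop.

Definition bstep (m : nat) (ab : (nat -> R) * (nat -> R)) : (nat -> R) * (nat -> R) :=
  let (a, b) := ab in
  let i := (m mod d)%nat in
  let g := (a i + b i) / 2 in
  if excluded_middle_informative (P a (upd b i g)) then (a, upd b i g) else (upd a i g, b).

Variables a0 b0 : nat -> R.
Fixpoint bseq (m : nat) : (nat -> R) * (nat -> R) :=
  match m with O => (a0, b0) | S m => bstep m (bseq m) end.

Hypothesis Hab0 : forall i, (i < d)%nat -> a0 i <= b0 i.
Hypothesis HP0 : P a0 b0.
Hypothesis HPs : forall a b i, (i < d)%nat -> (forall l, (l < d)%nat -> a l <= b l) -> P a b ->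
   P a (upd b i ((a i + b i)/2)) \/ P (upd a i ((a i + b i)/2)) b.

Lemma bseq_inv m : P (fst (bseq m)) (snd (bseq m)) /\
  (forall i, (i < d)%nat -> fst (bseq m) i <= snd (bseq m) i).
Proof. induction m; simpl; auto. destruct (bseq m) as [a b]; simpl in *. destruct IHm as [H1 H2].
 unfold bstep. set (i := (m mod d)%nat). assert (Hi : (i < d)%nat) by (apply Nat.mod_upper_bound; lia).
 destruct (excluded_middle_informative _); simpl; split; auto.
 intros l Hl; unfold upd; destruct (Nat.eq_dec l i); subst; auto. pose (H2 i Hi); lra.
 destruct (HPs a b i Hi H2 H1); tauto.
 intros l Hl; unfold upd; destruct (Nat.eq_dec l i); subst; auto. pose (H2 i Hi); lra. Qed.

Lemma bseq_mono1 m i : fst (bseq m) i <= fst (bseq (S m)) i /\ snd (bseq (S m)) i <= snd (bseq m) i.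
Proof. simpl. pose proof (bseq_inv m) as [_ H2]. destruct (bseq m) as [a b]; simpl in *.
 unfold bstep. set (j := (m mod d)%nat). assert (Hj : (j < d)%nat) by (apply Nat.mod_upper_bound; lia).
 pose proof (H2 j Hj).
 destruct (excluded_middle_informative _); simpl; unfold upd; destruct (Nat.eq_dec i j); subst; lra. Qed.

Lemma bseq_mono m m' i : (m <= m')%nat -> fst (bseq m) i <= fst (bseq m') i /\ snd (bseq m') i <= snd (bseq m) i.
Proof. induction 1. lra. pose proof (bseq_mono1 m0 i). lra. Qed.

Lemma bseq_width1 m i : (i < d)%nat ->
  snd (bseq (S m)) i - fst (bseq (S m)) i =
  if Nat.eq_dec i (m mod d) then (snd (bseq m) i - fst (bseq m) i) / 2 else snd (bseq m) i - fst (bseq m) i.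
Proof. intros Hi. simpl. destruct (bseq m) as [a b]; simpl in *.
 unfold bstep. destruct (excluded_middle_informative _); simpl; unfold upd;
 destruct (Nat.eq_dec i (m mod d)); subst; lra. Qed.

Lemma bseq_width q t i : (t <= d)%nat -> (i < d)%nat ->
  snd (bseq (q * d + t)) i - fst (bseq (q * d + t)) i =
  (b0 i - a0 i) / 2 ^ q * (if Nat.ltb i t then /2 else 1).
Proof. revert t. induction q; intros t.
 - induction t; intros Ht Hi. simpl. destruct (Nat.ltb_spec0 i 0); [lia|]. lra.
   replace (0 * d + S t)%nat with (S (0 * d + t)) by lia. rewrite bseq_width1; auto.
   rewrite IHt; try lia. replace ((0 * d + t) mod d)%nat with t.
   destruct (Nat.eq_dec i t); destruct (Nat.ltb_spec0 i t); destruct (Nat.ltb_spec0 i (S t)); try lia; simpl; try lra.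
   simpl. rewrite Nat.mod_small; lia.
 - induction t; intros Ht Hi.
   + replace (S q * d + 0)%nat with (q * d + d)%nat by lia. rewrite (IHq d); auto.
     destruct (Nat.ltb_spec0 i d); destruct (Nat.ltb_spec0 i 0); try lia. simpl. field.
     apply pow_nonzero; lra.
   + replace (S q * d + S t)%nat with (S (S q * d + t)) by lia. rewrite bseq_width1; auto.
     rewrite IHt; try lia. replace ((S q * d + t) mod d)%nat with t.
     destruct (Nat.eq_dec i t); destruct (Nat.ltb_spec0 i t); destruct (Nat.ltb_spec0 i (S t)); try lia; simpl; try lra.
     rewrite Nat.add_comm, Nat.Div0.mod_add, Nat.mod_small; lia. Qed.

Lemma bseq_width_q q i : (i < d)%nat ->
  snd (bseq (q * d)) i - fst (bseq (q * d)) i = (b0 i - a0 i) / 2 ^ q.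
Proof. intros Hi. pose proof (bseq_width q 0 i ltac:(lia) Hi). rewrite Nat.add_0_r in H.
 rewrite H. destruct (Nat.ltb_spec0 i 0); [lia|]. lra. Qed.

Lemma bseq_ab m m' i : (i < d)%nat -> fst (bseq m) i <= snd (bseq m') i.
Proof. intros Hi. destruct (bseq_mono m (Nat.max m m') i) as [H1 _]; try lia.
 destruct (bseq_mono m' (Nat.max m m') i) as [_ H2]; try lia.
 pose proof (proj2 (bseq_inv (Nat.max m m')) i Hi). lra. Qed.

Definition bE (i : nat) : R -> Prop := fun y => exists m, y = fst (bseq m) i.
Definition bx (i : nat) : R := epsilon (inhabits 0) (fun y => is_lub (bE i) y).

Lemma bx_spec i : (i < d)%nat -> is_lub (bE i) (bx i).
Proof. intros Hi. unfold bx. apply epsilon_spec.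
 destruct (completeness (bE i)) as [x Hx]. exists (snd (bseq 0) i). intros y [m ->]. apply bseq_ab; auto.
 exists (fst (bseq 0) i); exists 0%nat; auto. exists x; auto. Qed.

Lemma bx_in m i : (i < d)%nat -> fst (bseq m) i <= bx i <= snd (bseq m) i.
Proof. intros Hi. destruct (bx_spec i Hi) as [H1 H2]. split. apply H1. exists m; auto.
 apply H2. intros y [m' ->]. apply bseq_ab; auto. Qed.

End Bis.

Lemma bisect (d : nat) (Hd : (0 < d)%nat) (P : (nat -> R) -> (nat -> R) -> Prop) a0 b0 :
  (forall i, (i < d)%nat -> a0 i <= b0 i) -> P a0 b0 ->
  (forall a b i, (i < d)%nat -> (forall l, (l < d)%nat -> a l <= b l) -> P a b ->
     P a (upd b i ((a i + b i)/2)) \/ P (upd a i ((a i + b i)/2)) b) ->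
  exists x : nat -> R, forall q, exists a b, P a b /\
    forall i, (i < d)%nat -> a i <= x i <= b i /\ b i - a i = (b0 i - a0 i) / 2 ^ q
      /\ a0 i <= a i /\ b i <= b0 i.
Proof. intros H1 H2 H3. exists (bx d P a0 b0). intros q.
 exists (fst (bseq d P a0 b0 (q * d))), (snd (bseq d P a0 b0 (q * d))). split.
 apply bseq_inv; auto. intros i Hi. split. apply bx_in; auto. split. apply bseq_width_q; auto.
 apply (bseq_mono d Hd P a0 b0 H1 H2 H3 0 (q * d) i). lia. Qed.

From Coquelicot Require Import Coquelicot.
Open Scope R_scope.

Lemma sum_f_rsum f n : sum_f_R0 f n = rsum (S n) f.
Proof. induction n; simpl; auto. lra. rewrite IHn; simpl; auto. Qed.

Lemma rsum_tail f N M : (N <= M)%nat -> (forall j, (N <= j)%nat -> f j = 0) -> rsum M f = rsum N f.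
Proof. induction 1; intros; auto. simpl. rewrite IHle, H0; auto. lra. Qed.

Lemma inf_sum_finite f N : (forall j, (N <= j)%nat -> f j = 0) -> infinite_sum f (rsum N f).
Proof. intros H eps Heps. exists N. intros n Hn. rewrite sum_f_rsum, (rsum_tail f N (S n)); auto.
 unfold R_dist. rewrite Rminus_diag, Rabs_R0; lra. Qed.

Lemma inf_sum_series f l : infinite_sum f l -> is_series f l.
Proof. intros; apply is_series_Reals; auto. Qed.

Lemma inf_sum_nonneg f l : (forall j, 0 <= f j) -> infinite_sum f l -> 0 <= l.
Proof. intros H Hl. apply inf_sum_series in Hl. rewrite <- (is_series_unique _ _ Hl).
 rewrite <- (Rmult_0_l (Series f)), <- Series_scal_l. apply Series_le.
 intros; rewrite Rmult_0_l; split; auto; lra. eexists; eauto. Qed.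

Lemma inf_sum_scal c f l : infinite_sum f l -> infinite_sum (fun j => c * f j) (c * l).
Proof. intros H. apply is_series_Reals. apply inf_sum_series in H.
 apply (is_series_scal_l c) in H. exact H. Qed.

Lemma inf_sum_le f g lf lg : (forall j, f j <= g j) -> infinite_sum f lf -> infinite_sum g lg -> lf <= lg.
Proof. intros H Hf Hg. apply inf_sum_series in Hf, Hg.
 pose proof (is_series_minus _ _ _ _ Hg Hf) as Hm.
 assert (0 <= minus lg lf). apply (inf_sum_nonneg (fun n => minus (g n) (f n))).
 intros; unfold minus, plus, opp; simpl; unfold plus, opp; simpl. specialize (H j). lra.
 apply is_series_Reals; auto.
 unfold minus, plus, opp in H0; simpl in H0. lra. Qed.

Lemma inf_sum_unique f l1 l2 : infinite_sum f l1 -> infinite_sum f l2 -> l1 = l2.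
Proof. intros H1 H2. apply inf_sum_series in H1, H2. rewrite <- (is_series_unique _ _ H1).
 apply is_series_unique; auto. Qed.

Lemma glb_exists (E : R -> Prop) b : (exists x, E x) -> (forall x, E x -> b <= x) -> exists m, is_glb E m.
Proof. intros [x0 Hx0] Hb. destruct (completeness (fun y => E (- y))) as [M [H1 H2]].
 exists (- b). intros y Hy. specialize (Hb _ Hy). lra.
 exists (- x0). rewrite Ropp_involutive; auto.
 exists (- M). split. intros x Hx.
 assert (- x <= M). apply H1. rewrite Ropp_involutive; auto. lra.
 intros c Hc. assert (M <= - c). apply H2. intros y Hy. specialize (Hc _ Hy). lra. lra. Qed.

Lemma glb_unique E m1 m2 : is_glb E m1 -> is_glb E m2 -> m1 = m2.
Proof. intros [A1 B1] [A2 B2]. apply Rle_antisym; [apply B2|apply B1]; auto. Qed.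

Definition Cov (k : nat) (K : (nat -> R) -> Prop) : R -> Prop :=
  fun l => exists a b : nat -> nat -> R,
             (forall j i, a j i <= b j i) /\
             (forall x, inVk k x -> K x ->
                exists j, forall i, (i < k)%nat -> a j i <= x i <= b j i) /\
             infinite_sum (fun j => box_vol k (a j) (b j)) l.

Lemma lm_unfold k K v : lebesgue_measure k K v = is_glb (Cov k K) v.
Proof. reflexivity. Qed.

Lemma box_vol_nonneg k a b : (forall i, a i <= b i) -> 0 <= box_vol k a b.
Proof. intros; unfold box_vol; apply rprod_nonneg; intros; specialize (H i); lra. Qed.

Lemma Cov_nonneg k K l : Cov k K l -> 0 <= l.
Proof. intros [a [b [H1 [_ H3]]]]. eapply inf_sum_nonneg; eauto. intros; apply box_vol_nonneg; auto. Qed.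

Lemma om_nonneg k K v : lebesgue_measure k K v -> 0 <= v.
Proof. intros [_ H]. apply H. apply Cov_nonneg. Qed.

Lemma om_upper k K v l : lebesgue_measure k K v -> Cov k K l -> v <= l.
Proof. intros [H _]; auto. Qed.

Lemma om_mono k K1 K2 v1 v2 : (forall x, inVk k x -> K1 x -> K2 x) ->
  lebesgue_measure k K1 v1 -> lebesgue_measure k K2 v2 -> v1 <= v2.
Proof. intros H [A1 B1] [A2 B2]. apply B2. intros l [a [b [C1 [C2 C3]]]]. apply A1.
 exists a, b; repeat split; auto. Qed.

Lemma Cov_box k K L : (0 < k)%nat -> 0 <= L ->
  (forall x, inVk k x -> K x -> forall i, (i < k)%nat -> - L <= x i <= L) -> Cov k K ((2 * L) ^ k).
Proof. intros Hk HL H. exists (fun j i => if Nat.eq_dec j 0 then - L else 0), (fun j i => if Nat.eq_dec j 0 then L else 0).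
 split. intros; destruct (Nat.eq_dec j 0); lra. split.
 intros x Hx Kx; exists 0%nat; intros; simpl; apply H; auto.
 replace ((2 * L) ^ k) with (rsum 1 (fun j => box_vol k (fun i => if Nat.eq_dec j 0 then - L else 0) (fun i => if Nat.eq_dec j 0 then L else 0))).
 apply inf_sum_finite. intros j Hj. destruct (Nat.eq_dec j 0); [lia|]. unfold box_vol.
 rewrite (rprod_ext k _ (fun _ => 0)), rprod_const. apply pow_i; auto. intros; lra.
 simpl. unfold box_vol. rewrite (rprod_ext k _ (fun _ => 2 * L)), rprod_const. lra. intros; lra. Qed.

Lemma om_exists k K L : (0 < k)%nat -> 0 <= L ->
  (forall x, inVk k x -> K x -> forall i, (i < k)%nat -> - L <= x i <= L) ->
  exists v, lebesgue_measure k K v /\ 0 <= v <= (2 * L) ^ k.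
Proof. intros Hk HL H. destruct (glb_exists (Cov k K) 0) as [v Hv].
 eexists; apply Cov_box; eauto. apply Cov_nonneg.
 exists v; split; auto. split. eapply om_nonneg; eauto. eapply om_upper; eauto. apply Cov_box; auto. Qed.

Lemma Cov_scale k K1 K2 lam l : 0 < lam ->
  (forall x, inVk k x -> K2 x -> K1 (fun i => x i / lam)) -> Cov k K1 l -> Cov k K2 (lam ^ k * l).
Proof. intros Hl H [a [b [C1 [C2 C3]]]].
 exists (fun j i => lam * a j i), (fun j i => lam * b j i). split. intros; apply Rmult_le_compat_l; auto; lra.
 split. intros x Hx K2x. destruct (C2 (fun i => x i / lam)) as [j Hj]. intros i Hi; rewrite Hx; auto; lra.
 auto. exists j. intros i Hi. specialize (Hj i Hi). split.
 replace (x i) with (lam * (x i / lam)) by (field; lra). apply Rmult_le_compat_l; lra.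
 replace (x i) with (lam * (x i / lam)) by (field; lra). apply Rmult_le_compat_l; lra.
 replace (fun j => box_vol k (fun i => lam * a j i) (fun i => lam * b j i)) with
   (fun j => lam ^ k * box_vol k (a j) (b j)). apply inf_sum_scal; auto.
 apply functional_extensionality; intros j. unfold box_vol. rewrite <- rprod_scal.
 apply rprod_ext; intros; ring. Qed.

Definition scl (lam : R) (K : (nat -> R) -> Prop) : (nat -> R) -> Prop := fun x => K (fun i => x i / lam).

Lemma om_scale k K lam v : 0 < lam -> lebesgue_measure k K v -> lebesgue_measure k (scl lam K) (lam ^ k * v).
Proof. intros Hlam [A B]. assert (Hp : 0 < lam ^ k) by (apply pow_lt; auto). split.
 - intros l' Hl'. apply (Cov_scale k _ K (/ lam)) in Hl'.
   assert (v <= / lam ^ k * l'). apply A. rewrite pow_inv in Hl'. auto.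
   apply (Rmult_le_compat_l (lam ^ k)) in H; try lra. rewrite <- Rmult_assoc, Rinv_r in H; lra.
   apply Rinv_0_lt_compat; auto.
   intros x Hx Kx. unfold scl. replace (fun i => x i / / lam / lam) with x; auto.
   apply functional_extensionality; intros; field; lra.
 - intros b Hb. assert (b / lam ^ k <= v). apply B. intros l Hl. apply (Cov_scale k K (scl lam K) lam) in Hl; auto; try lra.
   specialize (Hb _ Hl). apply (Rmult_le_reg_l (lam ^ k)); auto. unfold Rdiv. rewrite <- Rmult_assoc.
   rewrite (Rmult_comm _ b), Rmult_assoc, Rinv_r; lra.
   apply (Rmult_le_compat_l (lam ^ k)) in H; try lra. unfold Rdiv in H. rewrite Rmult_comm, Rmult_assoc, Rinv_l in H; lra. Qed.


Lemma lm_ext k K1 K2 v : (forall x, inVk k x -> (K1 x <-> K2 x)) -> lebesgue_measure k K1 v -> lebesgue_measure k K2 v.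
Proof. intros H [A B]. split.
 - intros l [a [b [C1 [C2 C3]]]]. apply A. exists a, b; repeat split; auto. intros x Hx Kx. apply C2; auto. apply H; auto.
 - intros c Hc. apply B. intros l [a [b [C1 [C2 C3]]]]. apply Hc. exists a, b; repeat split; auto. intros x Hx Kx. apply C2; auto. apply H; auto.
Qed.

Lemma lm_unique k K v1 v2 : lebesgue_measure k K v1 -> lebesgue_measure k K v2 -> v1 = v2.
Proof. apply glb_unique. Qed.

Lemma INR_le_pow2 q : INR q <= 2 ^ q.
Proof. induction q. simpl; lra. rewrite S_INR. simpl. assert (1 <= 2 ^ q) by (apply pow_R1_Rle; lra). lra. Qed.

Lemma exists_pow2 D r : 0 < r -> exists q, D / 2 ^ q < r.
Proof. intros Hr. destruct (INR_archimed r D Hr) as [q Hq]. exists q.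
 assert (0 < 2 ^ q) by (apply pow_lt; lra). apply (Rmult_lt_reg_r (2 ^ q)); auto.
 unfold Rdiv; rewrite Rmult_assoc, Rinv_l; try lra. pose proof (INR_le_pow2 q).
 assert (INR q * r <= 2 ^ q * r) by (apply Rmult_le_compat_r; lra). lra. Qed.

Lemma cont_prod k w : (forall i, (i < k)%nat -> 0 <= w i) -> forall eps, 0 < eps ->
  exists rho, 0 < rho /\ rprod k (fun i => w i + 2 * rho) <= rprod k w + eps.
Proof. induction k; intros Hw eps He. exists 1; simpl; lra.
 set (Pk := rprod k w). assert (HP : 0 <= Pk) by (apply rprod_nonneg; intros; apply Hw; lia).
 assert (Hwk : 0 <= w k) by (apply Hw; lia).
 set (e1 := eps / (2 * (w k + 1))). assert (He1 : 0 < e1) by (unfold e1; apply Rdiv_lt_0_compat; lra).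
 destruct (IHk ltac:(intros; apply Hw; lia) e1 He1) as [r1 [Hr1 H1]].
 set (r := Rmin r1 (eps / (4 * (Pk + e1 + 1)))).
 assert (Hr : 0 < r). unfold r. apply Rmin_glb_lt; auto. apply Rdiv_lt_0_compat; lra.
 exists r; split; auto. simpl. fold Pk.
 assert (A : rprod k (fun i => w i + 2 * r) <= Pk + e1).
 eapply Rle_trans; [|apply H1]. apply rprod_le. intros i Hi. pose proof (Hw i ltac:(lia)).
 pose proof (Rmin_l r1 (eps / (4 * (Pk + e1 + 1)))). fold r in H0. lra.
 assert (B : 0 <= rprod k (fun i => w i + 2 * r)). apply rprod_nonneg; intros; pose proof (Hw i ltac:(lia)); lra.
 assert (C : rprod k (fun i => w i + 2 * r) * (w k + 2 * r) <= (Pk + e1) * (w k + 2 * r)).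
 apply Rmult_le_compat_r; lra.
 assert (D : e1 * w k <= eps / 2). unfold e1.
 replace (eps / (2 * (w k + 1)) * w k) with ((eps/2) * (w k / (w k + 1))) by (field; lra).
 assert (Q: w k / (w k + 1) <= 1). { apply (Rmult_le_reg_r (w k + 1)); [lra|]. unfold Rdiv; rewrite Rmult_assoc, Rinv_l; lra. }
 assert (0 <= w k / (w k + 1)) by (apply Rdiv_le_0_compat; lra). nra.
 assert (E : 2 * r * (Pk + e1) <= eps / 2). assert (r <= eps / (4 * (Pk + e1 + 1))) by apply Rmin_r.
 apply Rle_trans with (2 * (eps / (4 * (Pk + e1 + 1))) * (Pk + e1 + 1)).
 apply Rle_trans with (2 * r * (Pk + e1 + 1)). nra. apply Rmult_le_compat_r. lra. lra.
 apply Req_le; field; lra.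
 nra. Qed.

Lemma len1 a b al ga be : a <= b -> al <= ga <= be ->
  Rmax 0 (Rmin b be - Rmax a al) = Rmax 0 (Rmin b ga - Rmax a al) + Rmax 0 (Rmin b be - Rmax a ga).
Proof. intros; unfold Rmax, Rmin; repeat destruct Rle_dec; lra. Qed.

Lemma series_ge_term f j : (forall n, 0 <= f n) -> ex_series f -> f j <= Series f.
Proof. intros H Hf. set (g := fun n => if Nat.eq_dec n j then f j else 0).
 assert (Series g = f j). apply is_series_unique. apply is_series_Reals.
 replace (f j) with (rsum (S j) g). apply inf_sum_finite. intros; unfold g; destruct Nat.eq_dec; lia || auto.
 simpl. rewrite rsum_zero. unfold g; destruct Nat.eq_dec; try lia; lra. intros; unfold g; destruct Nat.eq_dec; lia || auto.
 rewrite <- H0. apply Series_le; auto. intros; unfold g; destruct Nat.eq_dec; subst; split; auto; lra. Qed.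

Lemma ex_series_nonneg_le f g : (forall n, 0 <= f n <= g n) -> ex_series g -> ex_series f.
Proof. intros H Hg. apply (ex_series_le f g); auto. intros n. unfold norm; simpl. unfold abs; simpl.
 rewrite Rabs_pos_eq; apply H. Qed.

Section CoverLower.
Variable k : nat.
Hypothesis Hk : (0 < k)%nat.
Variables al be : nat -> R.
Hypothesis Halbe : forall i, (i < k)%nat -> al i <= be i.
Variables a b : nat -> nat -> R.
Hypothesis Hab : forall j i, a j i <= b j i.
Hypothesis Hcov : forall x, inVk k x -> (forall i, (i < k)%nat -> al i <= x i <= be i) ->
  exists j, forall i, (i < k)%nat -> a j i <= x i <= b j i.
Variable l : R.
Hypothesis Hl : infinite_sum (fun j => box_vol k (a j) (b j)) l.
Hypothesis Hlt : l < box_vol k al be.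

Let eta := box_vol k al be - l.
Lemma eta_pos : 0 < eta. Proof. unfold eta; lra. Qed.

Definition rho (j : nat) : R := epsilon (inhabits 1) (fun r => 0 < r /\
  rprod k (fun i => (b j i - a j i) + 2 * r) <= box_vol k (a j) (b j) + eta / 4 * (/ 2) ^ j).

Lemma rho_spec j : 0 < rho j /\
  rprod k (fun i => (b j i - a j i) + 2 * rho j) <= box_vol k (a j) (b j) + eta / 4 * (/ 2) ^ j.
Proof. unfold rho. apply epsilon_spec. apply cont_prod. intros; specialize (Hab j i); lra.
 pose proof eta_pos. apply Rmult_lt_0_compat. lra. apply pow_lt; lra. Qed.

Definition a' j i := a j i - rho j.
Definition b' j i := b j i + rho j.
Definition vol' j := box_vol k (a' j) (b' j).

Lemma vol'_eq j : vol' j = rprod k (fun i => (b j i - a j i) + 2 * rho j).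
Proof. unfold vol', box_vol, a', b'. apply rprod_ext; intros; ring. Qed.

Lemma vol'_nonneg j : 0 <= vol' j.
Proof. unfold vol'. apply box_vol_nonneg. intros; unfold a', b'; pose proof (rho_spec j); pose proof (Hab j i); lra. Qed.

Definition gbound j := box_vol k (a j) (b j) + eta / 4 * (/ 2) ^ j.
Lemma gbound_series : is_series gbound (l + eta / 2).
Proof. unfold gbound. apply (is_series_plus (fun j => box_vol k (a j) (b j)) (fun j => eta / 4 * (/2) ^ j)).
 apply is_series_Reals; auto.
 replace (eta / 2) with (eta / 4 * / (1 - / 2)) by field. apply is_series_Reals. apply inf_sum_scal.
 apply is_series_Reals. apply is_series_geom. rewrite Rabs_pos_eq; lra. Qed.

Lemma vol'_ex : ex_series vol'.
Proof. apply (ex_series_nonneg_le _ gbound). intros; split. apply vol'_nonneg. rewrite vol'_eq. apply rho_spec.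
 eexists; apply gbound_series. Qed.

Definition w (al' be' : nat -> R) (j : nat) : R :=
  rprod k (fun i => Rmax 0 (Rmin (b' j i) (be' i) - Rmax (a' j i) (al' i))).

Lemma w_bounds al' be' j : 0 <= w al' be' j <= vol' j.
Proof. unfold w, vol', box_vol. split. apply rprod_nonneg; intros; apply Rmax_l.
 apply rprod_le. intros i Hi. split. apply Rmax_l. unfold a', b'. pose proof (rho_spec j); pose proof (Hab j i).
 unfold Rmax, Rmin; repeat destruct Rle_dec; lra. Qed.

Lemma w_ex al' be' : ex_series (w al' be').
Proof. apply (ex_series_nonneg_le _ vol'); [apply w_bounds| apply vol'_ex]. Qed.

Definition PP (al' be' : nat -> R) : Prop := Series (w al' be') < box_vol k al' be'.

Lemma PP0 : PP al be.
Proof. unfold PP. apply Rle_lt_trans with (Series vol'). apply Series_le. apply w_bounds. apply vol'_ex.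
 apply Rle_lt_trans with (Series gbound). apply Series_le. intros; split. apply vol'_nonneg.
 rewrite vol'_eq. apply rho_spec. eexists; apply gbound_series.
 rewrite (is_series_unique _ _ gbound_series). pose proof eta_pos. unfold eta in *. lra. Qed.

Lemma PP_split al' be' i : (i < k)%nat -> (forall l0, (l0 < k)%nat -> al' l0 <= be' l0) -> PP al' be' ->
  PP al' (upd be' i ((al' i + be' i)/2)) \/ PP (upd al' i ((al' i + be' i)/2)) be'.
Proof. intros Hi Hle HP. destruct (classic (PP al' (upd be' i ((al' i + be' i)/2)))) as [H|H]; auto.
 right. destruct (classic (PP (upd al' i ((al' i + be' i)/2)) be')) as [H'|H']; auto. exfalso.
 unfold PP in *. set (g := (al' i + be' i) / 2) in *. pose proof (Hle i Hi).
 assert (E1 : forall j, w al' be' j = w al' (upd be' i g) j + w (upd al' i g) be' j).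
 intros j. unfold w. apply (rprod_split k i). auto. unfold upd. destruct Nat.eq_dec; [|lia].
 apply len1. pose proof (rho_spec j); pose proof (Hab j i); unfold a', b'; lra. unfold g; lra.
 intros i0 Hi0 Hne. unfold upd. destruct Nat.eq_dec; [lia|]. auto.
 assert (E2 : box_vol k al' be' = box_vol k al' (upd be' i g) + box_vol k (upd al' i g) be').
 unfold box_vol. apply (rprod_split k i); auto. unfold upd; destruct Nat.eq_dec; [|lia]. lra.
 intros i0 Hi0 Hne. unfold upd. destruct Nat.eq_dec; [lia|]. auto.
 rewrite (Series_ext _ _ E1), Series_plus in HP; try apply w_ex. lra. Qed.

Lemma cover_contra : False.
Proof. destruct (bisect k Hk PP al be Halbe PP0 PP_split) as [x Hx].
 set (x' := fun i => if Nat.ltb i k then x i else 0).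
 assert (Hx' : inVk k x'). intros i Hi. unfold x'. destruct (Nat.ltb_spec0 i k); [lia|auto].
 destruct (Hcov x') as [j Hj]; auto.
 intros i Hi. destruct (Hx 0%nat) as [a0 [b0 [_ H0]]]. destruct (H0 i Hi) as [A [B [C D]]].
 unfold x'. destruct (Nat.ltb_spec0 i k); [|lia]. lra.
 destruct (rho_spec j) as [Hrho _].
 destruct (exists_pow2 (rsum k (fun i => be i - al i)) (rho j) Hrho) as [q Hq].
 destruct (Hx q) as [aq [bq [HPq Hq2]]].
 assert (Hw : w aq bq j = box_vol k aq bq).
 unfold w, box_vol. apply rprod_ext. intros i Hi. destruct (Hq2 i Hi) as [A [B _]].
 specialize (Hj i Hi). unfold x' in Hj. destruct (Nat.ltb_spec0 i k); [|lia].
 assert (W : (be i - al i) / 2 ^ q <= rsum k (fun i => be i - al i) / 2 ^ q).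
 apply Rmult_le_compat_r. left; apply Rinv_0_lt_compat, pow_lt; lra.
 apply (rsum_ge_term k (fun i => be i - al i)); auto. intros; specialize (Halbe i0 H); lra.
 unfold a', b'. unfold Rmax, Rmin; repeat destruct Rle_dec; lra.
 unfold PP in HPq. pose proof (series_ge_term (w aq bq) j (fun n => proj1 (w_bounds aq bq n)) (w_ex aq bq)). lra.
Qed.
End CoverLower.

Lemma cover_lower k al be a b l : (0 < k)%nat -> (forall i, (i < k)%nat -> al i <= be i) ->
  (forall j i, a j i <= b j i) ->
  (forall x, inVk k x -> (forall i, (i < k)%nat -> al i <= x i <= be i) ->
     exists j, forall i, (i < k)%nat -> a j i <= x i <= b j i) ->
  infinite_sum (fun j => box_vol k (a j) (b j)) l -> box_vol k al be <= l.
Proof. intros. destruct (Rle_or_lt (box_vol k al be) l); auto. exfalso.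
 eapply cover_contra; eauto. Qed.

Lemma om_lower k K al be v : (0 < k)%nat -> (forall i, (i < k)%nat -> al i <= be i) ->
  (forall x, inVk k x -> (forall i, (i < k)%nat -> al i <= x i <= be i) -> K x) ->
  lebesgue_measure k K v -> box_vol k al be <= v.
Proof. intros Hk Hle HK [_ B]. apply B. intros l [a [b [C1 [C2 C3]]]].
 eapply cover_lower; eauto. Qed.

Lemma grid N h y : (0 < N)%nat -> 0 < h -> 0 <= y <= INR N * h ->
  exists m, (m < N)%nat /\ INR m * h <= y <= INR (S m) * h.
Proof. induction N; intros HN Hh Hy; [lia|]. destruct (Nat.eq_dec N 0).
 - subst. exists 0%nat; split; auto. simpl in *; lra.
 - destruct (Rle_dec y (INR N * h)).
   + destruct IHN as [m [Hm1 Hm2]]; auto; try lia; try lra. exists m; split; auto.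
   + exists N; split; auto. rewrite S_INR in Hy. rewrite S_INR. lra. Qed.

Section Slab.
Variables (k j N : nat) (xi : nat -> R) (L eps : R).
Hypotheses (Hk : (0 < k)%nat) (Hj : (j < k)%nat) (Hxj : xi j <> 0) (HL : 0 < L) (Heps : 0 <= eps) (HN : (0 < N)%nat).

Let h := 2 * L / INR N.
Let HH := h * rsum k (fun l => Rabs (xi l)).
Let ell := 2 * (eps + HH) / Rabs (xi j).
Definition dig (J l : nat) : nat := ((J / N ^ l) mod N)%nat.
Definition zJ (J : nat) : nat -> R := fun l => if Nat.eq_dec l j then 0 else - L + h * INR (dig J l).
Definition cJ (J : nat) : R := - dot k xi (zJ J) / xi j.
Definition loJ (J l : nat) : R := if Nat.ltb J (N ^ k) then
  (if Nat.eq_dec l j then cJ J - ell / 2 + ell / INR N * INR (dig J l) else - L + h * INR (dig J l)) else 0.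
Definition hiJ (J l : nat) : R := loJ J l + (if Nat.ltb J (N ^ k) then (if Nat.eq_dec l j then ell / INR N else h) else 0).

Lemma INRN_pos : 0 < INR N. Proof. apply lt_0_INR; auto. Qed.
Lemma h_pos : 0 < h. Proof. unfold h. pose INRN_pos. apply Rdiv_lt_0_compat; lra. Qed.
Lemma HH_nonneg : 0 <= HH. Proof. unfold HH. pose h_pos. apply Rmult_le_pos. lra. apply rsum_nonneg; intros; apply Rabs_pos. Qed.
Lemma HH_pos : 0 < HH. Proof. unfold HH. pose h_pos. apply Rmult_lt_0_compat. lra.
 eapply Rlt_le_trans. apply (Rabs_pos_lt _ Hxj). apply (rsum_ge_term k (fun l => Rabs (xi l)) j); auto. intros; apply Rabs_pos. Qed.
Lemma ell_pos : 0 < ell. Proof. unfold ell. pose HH_pos. apply Rdiv_pos. lra. apply Rabs_pos_lt; auto. Qed.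

Lemma slab_total : infinite_sum (fun J => box_vol k (loJ J) (hiJ J)) ((2 * L) ^ (k - 1) * ell).
Proof.
 replace ((2 * L) ^ (k - 1) * ell) with (rsum (N ^ k) (fun J => box_vol k (loJ J) (hiJ J))).
 apply inf_sum_finite. intros J HJ. unfold box_vol, hiJ. destruct (Nat.ltb_spec0 J (N ^ k)); [lia|].
 rewrite (rprod_ext k _ (fun _ => 0)). rewrite rprod_const. apply pow_i; auto. intros; lra.
 rewrite (rsum_ext _ _ (fun _ => h ^ (k - 1) * (ell / INR N))). rewrite rsum_const.
 rewrite pow_INR. assert (E: INR N ^ k = INR N ^ (k-1) * INR N) by (replace k with (S (k-1)) at 1 by lia; simpl; ring).
 rewrite E. replace (2 * L) with (INR N * h). rewrite Rpow_mult_distr. pose INRN_pos. field. lra.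
 unfold h; pose INRN_pos; field; lra.
 intros J HJ. unfold box_vol. rewrite (rprod_one_diff k j _ h); auto.
 unfold hiJ. destruct (Nat.ltb_spec0 J (N ^ k)); [|lia]. destruct (Nat.eq_dec j j); [|lia]. f_equal; ring.
 intros i Hi Hne. unfold hiJ. destruct (Nat.ltb_spec0 J (N ^ k)); [|lia]. destruct (Nat.eq_dec i j); [lia|]. ring.
Qed.

Lemma slab_cover : forall x, inVk k x -> (fun x => (forall i, (i < k)%nat -> - L <= x i <= L) /\ Rabs (dot k xi x) <= eps) x ->
  exists J, forall i, (i < k)%nat -> loJ J i <= x i <= hiJ J i.
Proof.
 intros x Hx [Hb Hd]. pose proof h_pos as Hh. pose proof INRN_pos as HNp.
 assert (Hm : forall l, exists m, (l < k)%nat -> (m < N)%nat /\ INR m * h <= x l + L <= INR (S m) * h).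
 intros l. destruct (Nat.ltb_spec0 l k). destruct (grid N h (x l + L)) as [m Hm]; auto.
 specialize (Hb l l0). split. lra. unfold h. replace (INR N * (2 * L / INR N)) with (2 * L) by (field; lra). lra.
 exists m; auto. exists 0%nat; intros; lia.
 set (m := fun l => epsilon (inhabits 0%nat) (fun m => (l < k)%nat -> (m < N)%nat /\ INR m * h <= x l + L <= INR (S m) * h)).
 assert (Hms : forall l, (l < k)%nat -> (m l < N)%nat /\ INR (m l) * h <= x l + L <= INR (S (m l)) * h).
 intros l Hl. unfold m. pose proof (epsilon_spec (inhabits 0%nat) (fun m => (l < k)%nat -> (m < N)%nat /\ INR m * h <= x l + L <= INR (S m) * h) (Hm l)) as E. apply E; auto.
 set (z := fun l => if Nat.eq_dec l j then 0 else - L + h * INR (m l)).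
 set (c := - dot k xi z / xi j).
 set (r := fun l => if Nat.eq_dec l j then 0 else x l - z l).
 assert (Edot : dot k xi x = dot k xi z + dot k xi r + xi j * x j).
 unfold dot. rewrite <- (rsum_single k j (xi j * x j)); auto. rewrite <- !rsum_plus. apply rsum_ext.
 intros l Hl. unfold r. destruct (Nat.eq_dec l j) as [e|e]. subst. unfold z. destruct (Nat.eq_dec j j); [ring|lia]. unfold z. destruct (Nat.eq_dec l j); [lia|ring].
 assert (Hr : Rabs (dot k xi r) <= HH).
 eapply Rle_trans. apply dot_abs_le. apply Rle_trans with (rsum k (fun l => Rabs (xi l) * h)).
 apply rsum_le.
 intros l Hl. apply Rmult_le_compat_l. apply Rabs_pos. unfold r. destruct (Nat.eq_dec l j).
 rewrite Rabs_R0; lra. unfold z. destruct (Nat.eq_dec l j); [lia|].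
 destruct (Hms l Hl) as [_ [A B]]. rewrite S_INR in B. rewrite Rabs_pos_eq; lra.
 right. unfold HH. rewrite <- rsum_scal. apply rsum_ext; intros; ring.
 assert (Hc : Rabs (x j - c) <= ell / 2).
 assert (E : xi j * (x j - c) = dot k xi x - dot k xi r). unfold c. rewrite Edot. field; auto.
 assert (Rabs (xi j) * Rabs (x j - c) <= eps + HH). rewrite <- Rabs_mult, E.
 eapply Rle_trans. apply Rabs_triang. rewrite Rabs_Ropp. lra.
 unfold ell. assert (0 < Rabs (xi j)) by (apply Rabs_pos_lt; auto).
 apply (Rmult_le_reg_l (Rabs (xi j))); auto. replace (Rabs (xi j) * (2 * (eps + HH) / Rabs (xi j) / 2)) with (eps + HH) by (field; lra). lra.
 pose proof ell_pos as Hell.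
 destruct (grid N (ell / INR N) (x j - c + ell / 2)) as [mj [Hmj1 Hmj2]]; auto. apply Rdiv_pos; auto.
 replace (INR N * (ell / INR N)) with ell by (field; lra). apply Rabs_le_inv in Hc. lra.
 set (M := fun l => if Nat.eq_dec l j then mj else m l).
 assert (HM : forall l, (l < k)%nat -> (M l < N)%nat). intros l Hl; unfold M; destruct Nat.eq_dec; auto. apply Hms; auto.
 destruct (enc_spec M N k HN HM) as [HJ1 HJ2].
 exists (enc M N k). intros i Hi. unfold hiJ, loJ. destruct (Nat.ltb_spec0 (enc M N k) (N ^ k)) as [HJl|HJl]; [|lia].
 assert (Hc' : cJ (enc M N k) = c). unfold cJ, c. replace (dot k xi (zJ (enc M N k))) with (dot k xi z); auto. unfold dot. apply rsum_ext. intros l Hl.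
 unfold zJ, z, dig. destruct (Nat.eq_dec l j); auto. rewrite HJ2; auto. unfold M; destruct (Nat.eq_dec l j); [lia|auto].
 destruct (Nat.eq_dec i j).
 - subst. rewrite Hc'. unfold dig; rewrite HJ2; auto. unfold M; destruct (Nat.eq_dec j j); [|lia].
   rewrite S_INR in Hmj2. lra.
 - unfold dig; rewrite HJ2; auto. unfold M; destruct (Nat.eq_dec i j); [lia|].
   destruct (Hms i Hi) as [_ [A B]]. rewrite S_INR in B. lra.
Qed.

Lemma slab_upper v : lebesgue_measure k (fun x => (forall i, (i < k)%nat -> - L <= x i <= L) /\ Rabs (dot k xi x) <= eps) v ->
  v <= (2 * L) ^ (k - 1) * (2 * (eps + 2 * L / INR N * rsum k (fun l => Rabs (xi l))) / Rabs (xi j)).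
Proof. intros Hv. apply (om_upper _ _ _ _ Hv). exists loJ, hiJ. split.
 intros J i. unfold hiJ. pose proof h_pos; pose proof ell_pos; pose proof INRN_pos.
 destruct (Nat.ltb_spec0 J (N ^ k)). destruct Nat.eq_dec. assert (0 < ell / INR N) by (apply Rdiv_pos; auto). lra. lra. lra.
 split. apply slab_cover. apply slab_total. Qed.
End Slab.

Definition ev (j : nat) : nat -> R := fun i => if Nat.eq_dec i j then 1 else 0.
Definition zerov : nat -> R := fun _ => 0.

Lemma inVk_ev k j : (j < k)%nat -> inVk k (ev j).
Proof. intros Hj i Hi; unfold ev; destruct Nat.eq_dec; lia || auto. Qed.
Lemma inVk_scal k a x : inVk k x -> inVk k (fun i => a * x i).
Proof. intros H i Hi; rewrite H; auto; ring. Qed.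
Lemma inVk_zero k : inVk k zerov.
Proof. intros i _; reflexivity. Qed.

Lemma dot_zero_l k w : dot k zerov w = 0.
Proof. unfold dot, zerov; apply rsum_zero; intros; ring. Qed.
Lemma dot_zero_r k x w : (forall l, (l < k)%nat -> w l = 0) -> dot k x w = 0.
Proof. intros H; unfold dot; apply rsum_zero; intros; rewrite H; auto; ring. Qed.
Lemma dot_ev k j x : (j < k)%nat -> dot k (ev j) x = x j.
Proof. intros Hj. unfold dot. rewrite <- (rsum_single k j (x j)); auto. apply rsum_ext; intros.
 unfold ev; destruct Nat.eq_dec; subst; ring. Qed.
Lemma dot_scal_l k a x w : dot k (fun i => a * x i) w = a * dot k x w.
Proof. rewrite dot_comm, dot_scal_r, dot_comm; auto. Qed.

Section NormFacts.
Variables (k : nat) (p : (nat -> R) -> R).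
Hypothesis Hp : is_norm k p.

Lemma norm_zero : p zerov = 0.
Proof. destruct Hp as [_ [H _]]. pose proof (H 0 zerov (inVk_zero k)).
 replace (fun i => 0 * zerov i) with zerov in H0. rewrite Rabs_R0 in H0; lra.
 apply functional_extensionality; intros; unfold zerov; ring. Qed.

Lemma norm_nonneg x : inVk k x -> 0 <= p x.
Proof. intros Hx. destruct Hp as [_ [H1 H2]]. pose proof (H2 x (fun i => -1 * x i) Hx (inVk_scal k (-1) x Hx)).
 rewrite H1 in H; auto. replace (fun i => x i + -1 * x i) with zerov in H.
 rewrite norm_zero in H. replace (Rabs (-1)) with 1 in H by (unfold Rabs; destruct Rcase_abs; lra). lra.
 apply functional_extensionality; intros; unfold zerov; ring. Qed.

Lemma norm_ev_bound x : inVk k x -> p x <= rsum k (fun j => Rabs (x j) * p (ev j)).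
Proof. intros Hx. destruct Hp as [_ [H1 H2]].
 set (y := fun m i => if Nat.ltb i m then x i else 0).
 assert (Hy : forall m, inVk k (y m)). intros m i Hi. unfold y. destruct (Nat.ltb_spec0 i m); auto.
 assert (forall m, (m <= k)%nat -> p (y m) <= rsum m (fun j => Rabs (x j) * p (ev j))).
 induction m; intros Hm. simpl. replace (y 0%nat) with zerov. rewrite norm_zero; lra.
 apply functional_extensionality; intros; unfold y; destruct (Nat.ltb_spec0 x0 0); [lia|auto].
 replace (y (S m)) with (fun i => y m i + x m * ev m i). simpl.
 eapply Rle_trans. apply H2; auto. apply inVk_scal, inVk_ev; lia. rewrite H1. pose proof (IHm ltac:(lia)); lra.
 apply inVk_ev; lia.
 apply functional_extensionality; intros i. unfold y, ev. destruct (Nat.ltb_spec0 i m); destruct (Nat.ltb_spec0 i (S m));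
 destruct (Nat.eq_dec i m); try lia; subst; ring.
 replace x with (y k) at 1. apply H; lia.
 apply functional_extensionality; intros i. unfold y. destruct (Nat.ltb_spec0 i k); auto. rewrite Hx; auto; lia. Qed.

Lemma norm_ball_cube : exists r, 0 < r /\ forall x, inVk k x -> (forall i, (i < k)%nat -> Rabs (x i) <= r) -> p x <= 1.
Proof. set (s := rsum k (fun j => p (ev j))).
 assert (Hs : 0 <= s). apply rsum_nonneg; intros; apply norm_nonneg, inVk_ev; auto.
 exists (/ (1 + s)). split. apply Rinv_0_lt_compat; lra. intros x Hx Hb.
 eapply Rle_trans. apply norm_ev_bound; auto. apply Rle_trans with (/ (1 + s) * s).
 unfold s; rewrite <- rsum_scal. apply rsum_le; intros. apply Rmult_le_compat_r. apply norm_nonneg, inVk_ev; auto. auto.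
 apply (Rmult_le_reg_l (1 + s)). lra. rewrite <- Rmult_assoc, Rinv_r; lra. Qed.

Lemma norm_vol_pos v : (0 < k)%nat -> vol k p v -> 0 < v.
Proof. intros Hk Hv. destruct norm_ball_cube as [r [Hr H]].
 apply Rlt_le_trans with (box_vol k (fun _ => - r) (fun _ => r)).
 unfold box_vol. rewrite (rprod_ext k _ (fun _ => 2 * r)), rprod_const. apply pow_lt; lra. intros; lra.
 apply (om_lower k (fun x => p x <= 1)); auto. intros; lra. intros x Hx Hb. apply H; auto.
 intros; apply Rabs_le; auto. Qed.

Lemma dual_nonneg w d : dual_norm k p w d -> 0 <= d.
Proof. intros [H _]. apply H. exists zerov. split. apply inVk_zero. split. rewrite norm_zero; lra.
 rewrite dot_zero_l, Rabs_R0; auto. Qed.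

Lemma dual_bound w d : dual_norm k p w d -> forall x, inVk k x -> Rabs (dot k x w) <= d * p x.
Proof. intros Hd x Hx. pose proof (norm_nonneg x Hx). destruct Hp as [H0 [H1 H2]].
 destruct (Req_dec (p x) 0) as [E|E].
 - replace x with zerov. rewrite dot_zero_l, Rabs_R0, norm_zero; lra.
   apply functional_extensionality; intros i; unfold zerov; symmetry; apply H0; auto.
 - set (y := fun i => / p x * x i). assert (Hy : inVk k y) by (apply inVk_scal; auto).
   assert (Py : p y = 1). unfold y. rewrite H1; auto. rewrite Rabs_pos_eq. field; auto.
   left; apply Rinv_0_lt_compat; lra.
   destruct Hd as [Hd _]. assert (Rabs (dot k y w) <= d). apply Hd. exists y; repeat split; auto; lra.
   unfold y in H3. rewrite dot_scal_l, Rabs_mult, Rabs_pos_eq in H3. 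
   apply (Rmult_le_compat_l (p x)) in H3; auto. rewrite <- Rmult_assoc, Rinv_r in H3; lra.
   left; apply Rinv_0_lt_compat; lra.
Qed.

Lemma dual_pos w d j : (j < k)%nat -> w j <> 0 -> dual_norm k p w d -> 0 < d.
Proof. intros Hj Hw [Hd _]. destruct norm_ball_cube as [r [Hr H]].
 apply Rlt_le_trans with (Rabs (dot k (fun i => r * ev j i) w)).
 rewrite dot_scal_l, dot_ev; auto. rewrite Rabs_mult. apply Rmult_lt_0_compat. rewrite Rabs_pos_eq; lra.
 apply Rabs_pos_lt; auto.
 apply Hd. exists (fun i => r * ev j i). split. apply inVk_scal, inVk_ev; auto. split; auto.
 apply H. apply inVk_scal, inVk_ev; auto. intros; unfold ev; destruct Nat.eq_dec; rewrite Rabs_pos_eq; lra.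
Qed.

Lemma dual_zero w d : (forall l, (l < k)%nat -> w l = 0) -> dual_norm k p w d -> d = 0.
Proof. intros Hw Hd. pose proof (dual_nonneg w d Hd). destruct Hd as [_ H1].
 assert (d <= 0). apply H1. intros t [x [_ [_ ->]]]. rewrite dot_zero_r, Rabs_R0; auto; lra. lra. Qed.
End NormFacts.

Lemma Rmax_scal s a b : 0 <= s -> Rmax (s * a) (s * b) = s * Rmax a b.
Proof. intros. unfold Rmax. destruct (Rle_dec (s*a) (s*b)); destruct (Rle_dec a b); try reflexivity.
 assert (s = 0 \/ 0 < s) as [->|] by lra. ring. exfalso. apply n. apply (Rmult_le_reg_l s); lra.
 assert (s = 0 \/ 0 < s) as [->|] by lra. ring. exfalso. apply n. apply Rmult_le_compat_l; lra. Qed.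

Lemma rmaxn_scal n s f : 0 <= s -> rmaxn n (fun i => s * f i) = s * rmaxn n f.
Proof. intros Hs. induction n; simpl. ring. rewrite IHn. apply Rmax_scal; auto. Qed.

Section Q.
Variables (k n : nat) (xi : nat -> nat -> R).
Hypothesis Hk : (0 < k)%nat.
Hypothesis Hspan : spans k n xi.

Definition nz (i : nat) : Prop := exists l, (l < k)%nat /\ xi i l <> 0.

Lemma not_nz_zero i : ~ nz i -> forall l, (l < k)%nat -> xi i l = 0.
Proof. intros H l Hl. destruct (Req_dec (xi i l) 0); auto. exfalso; apply H; exists l; auto. Qed.

Lemma not_nz_dot i x : ~ nz i -> dot k (xi i) x = 0.
Proof. intros H. rewrite dot_comm. apply dot_zero_r. apply not_nz_zero; auto. Qed.

Definition acoef (j : nat) : nat -> R := epsilon (inhabits (fun _ => 0))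
  (fun c => forall l, (l < k)%nat -> ev j l = rsum n (fun i => c i * xi i l)).

Lemma acoef_spec j : (j < k)%nat -> forall l, (l < k)%nat -> ev j l = rsum n (fun i => acoef j i * xi i l).
Proof. intros Hj. unfold acoef. apply epsilon_spec. destruct Hspan as [_ H].
 apply H. apply inVk_ev; auto. Qed.

Lemma coord_formula x j : inVk k x -> (j < k)%nat -> x j = rsum n (fun i => acoef j i * dot k (xi i) x).
Proof. intros Hx Hj. rewrite <- (dot_ev k j x); auto. unfold dot.
 rewrite (rsum_ext k _ (fun l => rsum n (fun i => acoef j i * xi i l * x l))).
 rewrite rsum_swap. apply rsum_ext; intros. rewrite <- rsum_scal. apply rsum_ext; intros; ring.
 intros l Hl. rewrite (acoef_spec j Hj l Hl). rewrite Rmult_comm, <- rsum_scal. apply rsum_ext; intros; ring. Qed.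

Lemma exists_nz : exists i, (i < n)%nat /\ nz i.
Proof. apply NNPP; intros H. assert (forall i, (i < n)%nat -> ~ nz i). intros i Hi Hnz; apply H; exists i; auto.
 pose proof (coord_formula (ev 0) 0 (inVk_ev k 0 Hk) Hk). rewrite rsum_zero in H1. unfold ev in H1; simpl in H1. lra.
 intros; rewrite not_nz_dot; auto; ring. Qed.

Lemma n_pos : (0 < n)%nat.
Proof. destruct exists_nz as [i [Hi _]]; lia. Qed.

Definition Bt (t : nat -> R) : (nat -> R) -> Prop := fun x => forall i, (i < n)%nat -> Rabs (dot k (xi i) x) <= t i.
Definition Bnd (t : nat -> R) : R := rsum k (fun j => rsum n (fun i => Rabs (acoef j i) * t i)).

Lemma Bnd_nonneg t : (forall i, (i < n)%nat -> 0 <= t i) -> 0 <= Bnd t.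
Proof. intros; unfold Bnd; apply rsum_nonneg; intros; apply rsum_nonneg; intros. apply Rmult_le_pos; auto; apply Rabs_pos. Qed.

Lemma Bt_bounded t x : (forall i, (i < n)%nat -> 0 <= t i) -> inVk k x -> Bt t x -> forall j, (j < k)%nat -> Rabs (x j) <= Bnd t.
Proof. intros Ht Hx HB j Hj. rewrite (coord_formula x j Hx Hj). eapply Rle_trans. apply rsum_abs.
 apply Rle_trans with (rsum n (fun i => Rabs (acoef j i) * t i)). apply rsum_le; intros. rewrite Rabs_mult.
 apply Rmult_le_compat_l. apply Rabs_pos. apply HB; auto.
 unfold Bnd. apply (rsum_ge_term k (fun j => rsum n (fun i => Rabs (acoef j i) * t i))); auto.
 intros; apply rsum_nonneg; intros; apply Rmult_le_pos; auto; apply Rabs_pos. Qed.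

Lemma V_exists t : (forall i, (i < n)%nat -> 0 <= t i) -> exists v, lebesgue_measure k (Bt t) v /\ 0 <= v <= (2 * Bnd t) ^ k.
Proof. intros Ht. apply om_exists; auto. apply Bnd_nonneg; auto. intros x Hx HB i Hi.
 apply Rabs_le_inv. apply Bt_bounded; auto. Qed.

Lemma Bt_mono t t' : (forall i, (i < n)%nat -> t i <= t' i) -> forall x, Bt t x -> Bt t' x.
Proof. intros H x HB i Hi. eapply Rle_trans; [apply HB|apply H]; auto. Qed.

Lemma Bt_scale t lam : 0 < lam -> forall x, (Bt (fun i => lam * t i) x <-> scl lam (Bt t) x).
Proof. intros Hl x. unfold scl, Bt.
 assert (E : forall i, dot k (xi i) (fun l => x l / lam) = / lam * dot k (xi i) x).
 intros i. rewrite <- dot_scal_r. unfold dot; apply rsum_ext; intros; unfold Rdiv; ring.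
 split; intros H i Hi; specialize (H i Hi). rewrite E, Rabs_mult, Rabs_pos_eq.
 apply (Rmult_le_reg_l lam); auto. rewrite <- Rmult_assoc, Rinv_r; lra. left; apply Rinv_0_lt_compat; auto.
 rewrite E, Rabs_mult, Rabs_pos_eq in H. apply (Rmult_le_compat_l lam) in H; try lra.
 rewrite <- Rmult_assoc, Rinv_r in H; lra. left; apply Rinv_0_lt_compat; auto. Qed.

Definition qc (c : nat -> R) : (nat -> R) -> R := fun x => rmaxn n (fun i => c i * Rabs (dot k (xi i) x)).

Lemma qc_norm c : (forall i, (i < n)%nat -> 0 <= c i) -> (forall i, (i < n)%nat -> nz i -> 0 < c i) -> is_norm k (qc c).
Proof. intros H0 H1. split; [|split].
 - intros x Hx Hq j. destruct (Nat.ltb_spec0 j k) as [Hj|Hj]; [|apply Hx; lia].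
   rewrite (coord_formula x j Hx Hj). apply rsum_zero. intros i Hi.
   destruct (classic (nz i)). assert (c i * Rabs (dot k (xi i) x) <= 0).
   rewrite <- Hq. apply (rmaxn_ge n (fun i => c i * Rabs (dot k (xi i) x))); auto.
   specialize (H1 i Hi H). assert (Rabs (dot k (xi i) x) <= 0). apply (Rmult_le_reg_l (c i)); auto. lra.
   assert (E : dot k (xi i) x = 0). pose proof (Rabs_pos (dot k (xi i) x)). destruct (Req_dec (dot k (xi i) x) 0) as [E|E]; auto.
   pose proof (Rabs_pos_lt _ E). lra. rewrite E; ring.
   rewrite not_nz_dot; auto; ring.
 - intros a x Hx. unfold qc. rewrite <- rmaxn_scal. apply rmaxn_ext; intros. rewrite dot_scal_r, Rabs_mult; ring. apply Rabs_pos.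
 - intros x y Hx Hy. unfold qc. apply rmaxn_le. apply Rplus_le_le_0_compat; apply rmaxn_nonneg.
   intros i Hi.
   replace (fun i0 => x i0 + y i0) with (fun i0 => 1 * x i0 + 1 * y i0) by (apply functional_extensionality; intros; ring).
   rewrite dot_lin_r. rewrite !Rmult_1_l. eapply Rle_trans. apply Rmult_le_compat_l. auto. apply Rabs_triang.
   rewrite Rmult_plus_distr_l. apply Rplus_le_compat; apply (rmaxn_ge n (fun i => c i * Rabs (dot k (xi i) _))); auto.
Qed.

Definition cof (t : nat -> R) (i : nat) : R := if Rlt_dec 0 (t i) then / t i else 0.

Section CT.
Variable t : nat -> R.
Hypothesis Ht0 : forall i, (i < n)%nat -> 0 <= t i.
Hypothesis Htnz : forall i, (i < n)%nat -> nz i -> 0 < t i.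

Lemma qc_ball x : qc (cof t) x <= 1 <-> Bt t x.
Proof. split.
 - intros Hq i Hi. assert (H := rmaxn_ge n (fun i => cof t i * Rabs (dot k (xi i) x)) i Hi). fold (qc (cof t) x) in H.
   destruct (Rlt_dec 0 (t i)).
   assert (Ec : cof t i = / t i) by (unfold cof; destruct Rlt_dec; [auto|lra]). cbv beta in H. rewrite Ec in H.
   apply (Rmult_le_reg_l (/ t i)). apply Rinv_0_lt_compat; auto. rewrite Rinv_l; lra.
   assert (~ nz i) by (intros Hn; apply n0; apply Htnz; auto). rewrite not_nz_dot, Rabs_R0; auto.
 - intros HB. apply rmaxn_le. lra. intros i Hi. unfold cof. destruct (Rlt_dec 0 (t i)).
   apply Rle_trans with (/ t i * t i). apply Rmult_le_compat_l. left; apply Rinv_0_lt_compat; auto. apply HB; auto.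
   rewrite Rinv_l; lra. lra. Qed.

Lemma qc_isnorm : is_norm k (qc (cof t)).
Proof. apply qc_norm. intros; unfold cof; destruct Rlt_dec; [left; apply Rinv_0_lt_compat|]; lra.
 intros i Hi Hn. unfold cof; destruct Rlt_dec. apply Rinv_0_lt_compat; auto. exfalso; apply n0; apply Htnz; auto. Qed.

Lemma qc_dual i : (i < n)%nat -> exists d, dual_norm k (qc (cof t)) (xi i) d /\ 0 <= d <= t i.
Proof. intros Hi. set (E := fun s => exists x, inVk k x /\ qc (cof t) x <= 1 /\ s = Rabs (dot k x (xi i))).
 assert (HE : forall s, E s -> s <= t i). intros s [x [Hx [Hq ->]]]. rewrite dot_comm. apply qc_ball; auto.
 assert (H0 : E 0). exists zerov. split. apply inVk_zero. split. apply qc_ball. intros j Hj. rewrite dot_comm, dot_zero_l, Rabs_R0; auto.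
 rewrite dot_zero_l, Rabs_R0; auto.
 destruct (completeness E) as [d Hd]. exists (t i); auto. exists 0; auto.
 exists d. split. exact Hd. split. apply Hd; auto. apply Hd. intros s Hs; apply HE; auto. Qed.
End CT.
End Q.

Lemma fin_delta n (Q : nat -> R -> Prop) : (forall i, (i < n)%nat -> exists d, 0 < d /\ Q i d) ->
  (forall i d d', Q i d -> 0 < d' <= d -> Q i d') -> exists d, 0 < d /\ forall i, (i < n)%nat -> Q i d.
Proof. intros H Hm. induction n. exists 1; split; [lra| intros; lia].
 destruct IHn as [d1 [Hd1 H1]]. intros; apply H; lia. destruct (H n ltac:(lia)) as [d2 [Hd2 H2]].
 exists (Rmin d1 d2). split. apply Rmin_glb_lt; auto. intros i Hi. destruct (Nat.eq_dec i n).
 subst. apply (Hm n d2); auto. split. apply Rmin_glb_lt; auto. apply Rmin_r.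
 apply (Hm i d1); auto. apply H1; lia. split. apply Rmin_glb_lt; auto. apply Rmin_l. Qed.

Lemma pow_bern e k : 0 <= e <= 1 -> (1 + e) ^ k <= 1 + e * 2 ^ k.
Proof. intros He. assert ((1 + e) ^ k <= 1 + e * (2 ^ k - 1)).
 induction k. simpl; lra. simpl. assert (1 <= 2 ^ k) by (apply pow_R1_Rle; lra).
 assert (e * e <= e) by nra. nra. lra. Qed.

Lemma zero_by_eps a C : 0 <= C -> (forall eta, 0 < eta -> Rabs a <= C * eta) -> a = 0.
Proof. intros HC H. destruct (Req_dec a 0) as [E|E]; auto. exfalso.
 pose proof (Rabs_pos_lt a E). specialize (H (Rabs a / (2 * (C + 1)))).
 assert (0 < Rabs a / (2 * (C + 1))) by (apply Rdiv_pos; lra). specialize (H H1).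
 assert (C * (Rabs a / (2 * (C + 1))) < Rabs a). unfold Rdiv. rewrite <- Rmult_assoc.
 apply Rlt_le_trans with (Rabs a * / 2). 2: lra.
 replace (C * Rabs a * / (2 * (C + 1))) with (Rabs a * / 2 * (C / (C + 1))) by (field; lra).
 assert (C / (C + 1) < 1). apply (Rmult_lt_reg_r (C + 1)). lra. unfold Rdiv; rewrite Rmult_assoc, Rinv_l; lra.
 assert (0 <= C / (C + 1)) by (apply Rdiv_nonneg; lra). nra. lra. Qed.

Lemma Rpower_pow_inv k T : (0 < k)%nat -> 0 < T -> Rpower (T ^ k) (/ INR k) = T.
Proof. intros Hk HT. rewrite <- Rpower_pow; auto. rewrite Rpower_mult, Rinv_r. apply Rpower_1; auto.
 apply not_0_INR; lia. Qed.

Section Main.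
Variables (k n : nat) (xi : nat -> nat -> R).
Hypothesis Hk : (0 < k)%nat.
Hypothesis Hspan : spans k n xi.

Definition simp (t : nat -> R) : Prop :=
  (forall i, (i < n)%nat -> 0 <= t i) /\ (forall i, (i < n)%nat -> ~ nz k xi i -> t i = 0) /\ rsum n t = 1.

Definition Vf (t : nat -> R) : R := epsilon (inhabits 0) (fun v => lebesgue_measure k (Bt k n xi t) v).

Lemma Vf_spec t : (forall i, (i < n)%nat -> 0 <= t i) -> lebesgue_measure k (Bt k n xi t) (Vf t).
Proof. intros Ht. unfold Vf. apply epsilon_spec. destruct (V_exists k n xi Hk Hspan t Ht) as [v [Hv _]]. eauto. Qed.

Lemma Vf_nonneg t : (forall i, (i < n)%nat -> 0 <= t i) -> 0 <= Vf t.
Proof. intros; eapply om_nonneg; apply Vf_spec; auto. Qed.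

Lemma Vf_mono t t' : (forall i, (i < n)%nat -> 0 <= t i <= t' i) -> Vf t <= Vf t'.
Proof. intros H. apply (om_mono k (Bt k n xi t) (Bt k n xi t')). intros x _; apply Bt_mono; intros; apply H; auto.
 apply Vf_spec; intros; apply H; auto. apply Vf_spec; intros; specialize (H i H0); lra. Qed.

Lemma Vf_scale t lam : (forall i, (i < n)%nat -> 0 <= t i) -> 0 < lam -> Vf (fun i => lam * t i) = lam ^ k * Vf t.
Proof. intros Ht Hl. apply (lm_unique k (Bt k n xi (fun i => lam * t i))). apply Vf_spec.
 intros; apply Rmult_le_pos; auto; lra.
 apply (lm_ext k (scl lam (Bt k n xi t))). intros x _. symmetry; apply Bt_scale; auto.
 apply om_scale; auto. apply Vf_spec; auto. Qed.

Definition Aconst : R := Bnd k n xi (fun _ => 1).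

Lemma Bnd_mono t t' : (forall i, (i < n)%nat -> t i <= t' i) -> Bnd k n xi t <= Bnd k n xi t'.
Proof. intros H; unfold Bnd; apply rsum_le; intros; apply rsum_le; intros. apply Rmult_le_compat_l. apply Rabs_pos. auto. Qed.

Lemma simp_le1 t : simp t -> forall i, (i < n)%nat -> 0 <= t i <= 1.
Proof. intros [H1 [_ H3]] i Hi. split; auto. rewrite <- H3. apply rsum_ge_term; auto. Qed.

Lemma Aconst_nonneg : 0 <= Aconst.
Proof. apply Bnd_nonneg. intros; lra. Qed.

Lemma Vf_simp_bound t : simp t -> Vf t <= (2 * Aconst) ^ k.
Proof. intros Hs. pose proof (simp_le1 t Hs) as H1.
 destruct (V_exists k n xi Hk Hspan t) as [v [Hv [_ Hvb]]]. intros; apply H1; auto.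
 rewrite (lm_unique _ _ _ _ (Vf_spec t ltac:(intros; apply H1; auto)) Hv).
 eapply Rle_trans; eauto. apply pow_le_compat. split. apply Rmult_le_pos. lra. apply Bnd_nonneg; intros; apply H1; auto.
 apply Rmult_le_compat_l. lra. apply Bnd_mono. intros; apply H1; auto. Qed.

Lemma simp_cube t x : simp t -> inVk k x -> Bt k n xi t x -> forall j, (j < k)%nat -> - (Aconst + 1) <= x j <= Aconst + 1.
Proof. intros Hs Hx HB j Hj. pose proof (simp_le1 t Hs) as H1.
 assert (Rabs (x j) <= Aconst). eapply Rle_trans. apply (Bt_bounded k n xi Hspan t); auto. intros; apply H1; auto.
 apply Bnd_mono; intros; apply H1; auto. apply Rabs_le_inv in H. lra. Qed.


Lemma exists_t0 : exists t0, simp t0 /\ 0 < Vf t0.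
Proof.
 set (w := fun i => if excluded_middle_informative (nz k xi i) then 1 else 0).
 set (Cnt := rsum n w).
 assert (Hw : forall i, 0 <= w i) by (intros; unfold w; destruct excluded_middle_informative; lra).
 destruct (exists_nz k n xi Hk Hspan) as [i0 [Hi0 Hnz0]].
 assert (HC : 1 <= Cnt). replace 1 with (w i0). apply rsum_ge_term; auto. unfold w; destruct excluded_middle_informative; tauto.
 set (t0 := fun i => / Cnt * w i).
 assert (Hs : simp t0). split; [|split].
  intros; unfold t0; apply Rmult_le_pos; auto; left; apply Rinv_0_lt_compat; lra.
  intros i Hi Hn; unfold t0, w; destruct excluded_middle_informative; [tauto|ring].
  unfold t0. rewrite rsum_scal. fold Cnt. field; lra.
 exists t0; split; auto.
 set (Xi := rsum n (fun i => rsum k (fun l => Rabs (xi i l)))).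
 assert (HXi : 0 <= Xi) by (apply rsum_nonneg; intros; apply rsum_nonneg; intros; apply Rabs_pos).
 set (r := / (Cnt * (1 + Xi))).
 assert (Hr : 0 < r) by (unfold r; apply Rinv_0_lt_compat; nra).
 apply Rlt_le_trans with (box_vol k (fun _ => - r) (fun _ => r)).
 unfold box_vol. rewrite (rprod_ext k _ (fun _ => 2 * r)), rprod_const. apply pow_lt; lra. intros; lra.
 apply (om_lower k (Bt k n xi t0)); auto. intros; lra.
 2: apply Vf_spec; apply Hs.
 intros x Hx Hb i Hi. unfold t0, w. destruct excluded_middle_informative as [Hn|Hn].
 - rewrite dot_comm. eapply Rle_trans. apply dot_abs_le.
   apply Rle_trans with (r * Xi).
   apply Rle_trans with (r * rsum k (fun l => Rabs (xi i l))).
   rewrite <- rsum_scal. apply rsum_le; intros l Hl. apply Rmult_le_compat_r. apply Rabs_pos. apply Rabs_le. apply Hb; auto.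
   apply Rmult_le_compat_l. lra. unfold Xi. apply (rsum_ge_term n (fun i => rsum k (fun l => Rabs (xi i l)))); auto.
   intros; apply rsum_nonneg; intros; apply Rabs_pos.
   unfold r. rewrite Rmult_1_r.
   replace (/ (Cnt * (1 + Xi)) * Xi) with (/ Cnt * (Xi / (1 + Xi))) by (field; lra).
   rewrite <- (Rmult_1_r (/ Cnt)) at 2. apply Rmult_le_compat_l. left; apply Rinv_0_lt_compat; lra.
   apply (Rmult_le_reg_r (1 + Xi)). lra. unfold Rdiv; rewrite Rmult_assoc, Rinv_l; lra.
 - rewrite not_nz_dot, Rabs_R0; auto; lra.
Qed.

Lemma small_coord eps : 0 < eps -> exists d, 0 < d /\ forall i, (i < n)%nat -> nz k xi i ->
  forall t, simp t -> t i < d -> Vf t <= eps.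
Proof. intros He.
 destruct (fin_delta n (fun i d => nz k xi i -> forall t, simp t -> t i < d -> Vf t <= eps)) as [d [Hd H]].
 3: { exists d; split; auto. }
 2: { intros i d d' Hq [Hd' Hle] Hn t Ht Hti. apply Hq; auto. lra. }
 intros i Hi. destruct (classic (nz k xi i)) as [Hn|Hn]; [| exists 1; split; [lra| tauto]].
 destruct Hn as [l [Hl Hxl]].
 set (L := Aconst + 1). assert (HL : 0 < L) by (unfold L; pose Aconst_nonneg; lra).
 set (Xs := rsum k (fun l => Rabs (xi i l))). assert (HXs : 0 <= Xs) by (apply rsum_nonneg; intros; apply Rabs_pos).
 assert (Hax : 0 < Rabs (xi i l)) by (apply Rabs_pos_lt; auto).
 set (C := (2 * L) ^ (k - 1) * 2 / Rabs (xi i l)).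
 assert (HC : 0 < C). unfold C. apply Rdiv_pos; auto. apply Rmult_lt_0_compat; [apply pow_lt; lra| lra].
 set (d := eps / (2 * C)). assert (Hd : 0 < d) by (unfold d; apply Rdiv_pos; lra).
 destruct (INR_archimed d (2 * L * Xs + 1)) as [N HN]; [lra|].
 assert (HN0 : (0 < N)%nat). destruct N; [simpl in HN; nra| lia].
 assert (HNp : 0 < INR N) by (apply lt_0_INR; auto).
 exists d; split; auto. intros _ t Ht Hti.
 destruct (om_exists k (fun x => (forall j, (j < k)%nat -> - L <= x j <= L) /\ Rabs (dot k (xi i) x) <= d) L) as [vs [Hvs _]]; auto; try lra.
 intros x _ [H1 _] j Hj; auto.
 apply Rle_trans with vs.
 eapply (om_mono k (Bt k n xi t)); [| apply Vf_spec; apply Ht | exact Hvs].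
 intros x Hx HB. split. intros j Hj. apply (simp_cube t x); auto.
  eapply Rle_trans. apply HB; auto. lra.
 eapply Rle_trans. apply (slab_upper k l N (xi i) L d Hk Hl Hxl HL ltac:(lra) HN0 vs Hvs).
 fold Xs.
 replace ((2 * L) ^ (k - 1) * (2 * (d + 2 * L / INR N * Xs) / Rabs (xi i l))) with (C * (d + 2 * L / INR N * Xs)) by (unfold C; field; lra).
 assert (2 * L / INR N * Xs <= d).
   replace (2 * L / INR N * Xs) with ((2 * L * Xs) / INR N) by (field; lra). apply (Rmult_le_reg_r (INR N)); auto. unfold Rdiv; rewrite Rmult_assoc, Rinv_l; lra.
 apply Rle_trans with (C * (2 * d)). apply Rmult_le_compat_l; lra. unfold d. right; field; lra.
Qed.

Lemma exists_max : exists ts, simp ts /\ (forall i, (i < n)%nat -> nz k xi i -> 0 < ts i) /\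
  forall t, simp t -> Vf t <= Vf ts.
Proof.
 destruct exists_t0 as [t0 [Ht0 HV0]].
 set (E := fun v => exists t, simp t /\ v = Vf t).
 destruct (completeness E) as [S [HS1 HS2]].
 exists ((2 * Aconst) ^ k). intros v [t [Ht ->]]. apply Vf_simp_bound; auto.
 exists (Vf t0). exists t0; auto.
 assert (HSp : 0 < S). apply Rlt_le_trans with (Vf t0); auto. apply HS1. exists t0; auto.
 destruct (small_coord (S / 2)) as [dl [Hdl Hsmall]]. lra.
 set (gapm := fun m : nat => Rmin (S / 2) (/ (INR m + 1))).
 assert (Hgap : forall m, 0 < gapm m). intros m; unfold gapm; apply Rmin_glb_lt. lra. apply Rinv_0_lt_compat. pose (pos_INR m); lra.
 assert (Hex : forall m, exists t, simp t /\ S - gapm m < Vf t).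
 intros m. apply NNPP; intros H. assert (S <= S - gapm m). apply HS2. intros v [t [Ht ->]].
   apply Rnot_lt_le. intros Hlt. apply H. exists t; auto. specialize (Hgap m); lra.
 set (u := fun m => epsilon (inhabits (fun _ : nat => 0)) (fun t => simp t /\ S - gapm m < Vf t)).
 assert (Hu : forall m, simp (u m) /\ S - gapm m < Vf (u m)). intros m; unfold u; apply epsilon_spec; auto.
 assert (Hud : forall m i, (i < n)%nat -> nz k xi i -> dl <= u m i).
 intros m i Hi Hn. apply Rnot_lt_le; intros Hlt. pose proof (Hsmall i Hi Hn (u m) (proj1 (Hu m)) Hlt).
   destruct (Hu m) as [_ H2]. assert (gapm m <= S / 2) by apply Rmin_l. lra.
 set (P := fun a b : nat -> R => forall N, exists m, (N <= m)%nat /\ forall i, (i < n)%nat -> a i <= u m i <= b i).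
 destruct (bisect n (n_pos k n xi Hk Hspan) P (fun _ => 0) (fun _ => 1)) as [x Hx].
 intros; lra.
 intros N; exists N; split; auto. intros i Hi. apply simp_le1; auto. apply Hu.
 intros a b i Hi Hab HP. apply NNPP; intros Hno. apply not_or_and in Hno. destruct Hno as [H1 H2].
 apply not_all_ex_not in H1. destruct H1 as [N1 H1]. apply not_all_ex_not in H2. destruct H2 as [N2 H2].
 destruct (HP (Nat.max N1 N2)) as [m [Hm Hin]].
 destruct (Rle_dec (u m i) ((a i + b i)/2)).
 apply H1. exists m. split. lia. intros l Hl. unfold upd. destruct Nat.eq_dec. subst. split; [apply Hin; auto| auto]. apply Hin; auto.
 apply H2. exists m. split. lia. intros l Hl. unfold upd. destruct Nat.eq_dec. subst. split; [lra| apply Hin; auto]. apply Hin; auto.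
 assert (Happ : forall eta, 0 < eta -> forall N, exists m, (N <= m)%nat /\ forall i, (i < n)%nat -> Rabs (u m i - x i) <= eta).
 intros eta He N. destruct (exists_pow2 1 eta He) as [q Hq]. destruct (Hx q) as [a [b [HP Hb]]].
 destruct (HP N) as [m [Hm Hin]]. exists m; split; auto. intros i Hi. destruct (Hb i Hi) as [[A B] [W _]].
 specialize (Hin i Hi). replace (1 - 0) with 1 in W by ring. apply Rabs_le. lra.
 assert (Hx0 : forall i, (i < n)%nat -> 0 <= x i).
 intros i Hi. destruct (Hx 0%nat) as [a [b [_ Hb]]]. destruct (Hb i Hi) as [[A _] [_ [C _]]]. lra.
 assert (Hxz : forall i, (i < n)%nat -> ~ nz k xi i -> x i = 0).
 intros i Hi Hn. apply (zero_by_eps (x i) 1). lra. intros eta He. destruct (Happ eta He 0%nat) as [m [_ Hm]].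
 specialize (Hm i Hi). rewrite (proj1 (proj2 (proj1 (Hu m))) i Hi Hn) in Hm. rewrite Rabs_minus_sym, Rminus_0_r in Hm. lra.
 assert (Hxs : rsum n x = 1).
 assert (rsum n x - 1 = 0). apply (zero_by_eps _ (INR n)). apply pos_INR. intros eta He.
 destruct (Happ eta He 0%nat) as [m [_ Hm]]. destruct (Hu m) as [[_ [_ Hs1]] _].
 rewrite <- Hs1, <- rsum_minus. eapply Rle_trans. apply rsum_abs. apply rsum_le_const.
 intros i Hi. rewrite Rabs_minus_sym; auto. lra.
 assert (Hsx : simp x) by (split; [|split]; auto).
 assert (Hxd : forall i, (i < n)%nat -> nz k xi i -> dl <= x i).
 intros i Hi Hn. apply Rnot_lt_le; intros Hlt. destruct (Happ ((dl - x i)/2) ltac:(lra) 0%nat) as [m [_ Hm]].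
 specialize (Hm i Hi). apply Rabs_le_inv in Hm. specialize (Hud m i Hi Hn). lra.
 assert (HVS : S <= Vf x).
 { apply Rnot_lt_le; intros Hlt. set (gap := S - Vf x).
   assert (HVx : 0 <= Vf x) by (apply Vf_nonneg; apply Hsx).
   assert (Hgp : 0 < gap) by (unfold gap; lra).
   assert (HK2 : 0 < 2 ^ k) by (apply pow_lt; lra).
   set (e := Rmin 1 (gap / (2 * 2 ^ k * (Vf x + 1)))).
   assert (He : 0 < e). unfold e. apply Rmin_glb_lt. lra. apply Rdiv_pos. auto. apply Rmult_lt_0_compat. lra. lra.
   assert (He1 : e <= 1) by apply Rmin_l.
   destruct (INR_archimed (gap/2) 1) as [N HN]. lra.
   destruct (Happ (e * dl) ltac:(nra) N) as [m [Hm Hum]].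
   assert (Hle : forall i, (i < n)%nat -> 0 <= u m i <= (1 + e) * x i).
   intros i Hi. split. apply Hu; auto. destruct (classic (nz k xi i)) as [Hn|Hn].
     specialize (Hum i Hi). apply Rabs_le_inv in Hum. specialize (Hxd i Hi Hn). nra.
     rewrite (proj1 (proj2 (proj1 (Hu m))) i Hi Hn), Hxz; auto; lra.
   assert (V1 : Vf (u m) <= (1 + e) ^ k * Vf x).
   rewrite <- Vf_scale. apply Vf_mono. auto. apply Hsx. lra.
   assert (V2 : (1 + e) ^ k * Vf x <= Vf x + gap / 2).
   apply Rle_trans with ((1 + e * 2 ^ k) * Vf x). apply Rmult_le_compat_r; auto. apply pow_bern; lra.
   assert (e * 2 ^ k * Vf x <= gap / 2).
   assert (e <= gap / (2 * 2 ^ k * (Vf x + 1))) by apply Rmin_r.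
   apply Rle_trans with (gap / (2 * 2 ^ k * (Vf x + 1)) * 2 ^ k * Vf x).
   apply Rmult_le_compat_r; auto. apply Rmult_le_compat_r; lra.
   replace (gap / (2 * 2 ^ k * (Vf x + 1)) * 2 ^ k * Vf x) with (gap / 2 * (Vf x / (Vf x + 1))) by (field; lra).
   rewrite <- (Rmult_1_r (gap / 2)) at 2. apply Rmult_le_compat_l. lra.
   apply (Rmult_le_reg_r (Vf x + 1)). lra. unfold Rdiv; rewrite Rmult_assoc, Rinv_l; lra. lra.
   destruct (Hu m) as [_ Hm2]. assert (gapm m <= / (INR m + 1)) by apply Rmin_r.
   assert (/ (INR m + 1) < gap / 2).
   assert (INR N <= INR m) by (apply le_INR; auto).
   apply (Rmult_lt_reg_l (INR m + 1)). pose (pos_INR m); lra. rewrite Rinv_r. nra. pose (pos_INR m); lra.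
   unfold gap in *. lra. }
 exists x. split; auto. split. intros i Hi Hn. apply Rlt_le_trans with dl; auto.
 intros t Ht. apply Rle_trans with S; auto. apply HS1. exists t; auto.
Qed.
End Main.

Theorem mainTheorem16 (k n : nat) (xi : nat -> nat -> R) :
  (0 < k)%nat ->
  spans k n xi ->
  exists m : R,
    is_glb (fun s => exists p, is_norm k p /\ SH k n xi p s) m /\
    0 < m /\
    exists c : nat -> R,
      (forall i, (i < n)%nat -> 0 <= c i) /\
      is_norm k (fun x => rmaxn n (fun i => c i * Rabs (dot k (xi i) x))) /\
      SH k n xi (fun x => rmaxn n (fun i => c i * Rabs (dot k (xi i) x))) m.
Proof.
 intros Hk Hspan.
 destruct (exists_max k n xi Hk Hspan) as [ts [Hs [Hpos Hmax]]].
 pose proof Hs as [Hts0 [Htsz Hts1]].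
 set (c := cof ts).
 assert (Hq : is_norm k (qc k n xi c)) by (apply qc_isnorm; auto).
 set (dq := fun i => epsilon (inhabits 0) (fun d => dual_norm k (qc k n xi c) (xi i) d /\ 0 <= d <= ts i)).
 assert (Hdq : forall i, (i < n)%nat -> dual_norm k (qc k n xi c) (xi i) (dq i) /\ 0 <= dq i <= ts i).
 { intros i Hi; unfold dq; apply epsilon_spec; apply qc_dual; auto. }
 set (Vs := Vf k n xi ts).
 assert (HVq : vol k (qc k n xi c) Vs).
 { unfold vol. apply (lm_ext k (Bt k n xi ts)). intros x _. symmetry; apply qc_ball; auto. apply Vf_spec; auto. }
 assert (HVs : 0 < Vs) by (apply (norm_vol_pos k _ Hq); auto).
 set (m := rsum n dq / Rpower Vs (/ INR k)).
 assert (HSHq : SH k n xi (qc k n xi c) m).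
 { exists dq, Vs. split; [intros; apply Hdq; auto| split; auto]. }
 assert (HRp : 0 < Rpower Vs (/ INR k)) by (unfold Rpower; apply exp_pos).
 destruct (exists_nz k n xi Hk Hspan) as [i0 [Hi0 [l0 [Hl0 Hx0]]]].
 assert (Hlow : forall p s, is_norm k p -> SH k n xi p s -> m <= s).
 { intros p s Hp [d [v [Hd [Hv ->]]]].
   assert (Hv0 : 0 < v) by (eapply norm_vol_pos; eauto).
   assert (Hd0 : forall i, (i < n)%nat -> 0 <= d i) by (intros; eapply dual_nonneg; eauto).
   assert (Hdz : forall i, (i < n)%nat -> ~ nz k xi i -> d i = 0).
   { intros i Hi Hn. eapply dual_zero; eauto. apply not_nz_zero; auto. }
   assert (Hdi0 : 0 < d i0) by (eapply dual_pos; eauto).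
   set (T := rsum n d). assert (HT : 0 < T).
   { apply Rlt_le_trans with (d i0); auto. apply rsum_ge_term; auto. }
   assert (Hvd : v <= Vf k n xi d).
   { apply (om_mono k (fun x => p x <= 1) (Bt k n xi d)); auto. 2: apply Vf_spec; auto.
     intros x Hx Hpx i Hi. rewrite dot_comm. eapply Rle_trans. eapply dual_bound; eauto.
     rewrite <- (Rmult_1_r (d i)) at 2. apply Rmult_le_compat_l; auto. }
   set (t' := fun i => / T * d i).
   assert (Hst' : simp k n xi t').
   { split; [|split]. intros; unfold t'; apply Rmult_le_pos; auto; left; apply Rinv_0_lt_compat; auto.
     intros i Hi Hn; unfold t'; rewrite Hdz; auto; ring. unfold t'. rewrite rsum_scal. fold T. field; lra. }
   assert (Hdt : Vf k n xi d = T ^ k * Vf k n xi t').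
   { rewrite <- Vf_scale; auto. f_equal. apply functional_extensionality; intros; unfold t'; field; lra.
     intros; apply Hst'; auto. }
   assert (Hv1 : v <= T ^ k * Vs).
   { rewrite Hdt in Hvd. eapply Rle_trans; eauto. apply Rmult_le_compat_l. left; apply pow_lt; auto. apply Hmax; auto. }
   assert (HR : Rpower v (/ INR k) <= T * Rpower Vs (/ INR k)).
   { apply Rle_trans with (Rpower (T ^ k * Vs) (/ INR k)). apply Rle_Rpower_l.
     left; apply Rinv_0_lt_compat, lt_0_INR; auto. split; auto.
     rewrite <- Rpower_mult_distr; [| apply pow_lt; auto| auto]. rewrite Rpower_pow_inv; auto. lra. }
   assert (HRv : 0 < Rpower v (/ INR k)) by (unfold Rpower; apply exp_pos).
   unfold m. apply Rle_trans with (1 / Rpower Vs (/ INR k)).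
   { unfold Rdiv. apply Rmult_le_compat_r. left; apply Rinv_0_lt_compat; auto. rewrite <- Hts1. apply rsum_le.
     intros; apply Hdq; auto. }
   fold T. apply (Rmult_le_reg_r (Rpower v (/ INR k) * Rpower Vs (/ INR k))). nra.
   replace (1 / Rpower Vs (/ INR k) * (Rpower v (/ INR k) * Rpower Vs (/ INR k))) with (Rpower v (/ INR k)) by (field; lra).
   replace (T / Rpower v (/ INR k) * (Rpower v (/ INR k) * Rpower Vs (/ INR k))) with (T * Rpower Vs (/ INR k)) by (field; lra).
   auto. }
 exists m. split; [split|split].
 - intros s [p [Hp Hsh]]. eapply Hlow; eauto.
 - intros b Hb. apply Hb. exists (qc k n xi c); auto.
 - unfold m. apply Rdiv_pos; auto. apply Rlt_le_trans with (dq i0).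
   apply (dual_pos k _ Hq (xi i0) (dq i0) l0); auto. apply Hdq; auto.
   apply rsum_ge_term; auto. intros; apply Hdq; auto.
 - exists c. split. intros; unfold c, cof; destruct Rlt_dec; [left; apply Rinv_0_lt_compat; auto| lra].
   split; [exact Hq| exact HSHq].
Qed.
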